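(* Let $0<R_{\rm id}<R_{\rm d}$, and let $\Omega$, $\Gamma_{\rm d}$, $\Gamma_{\rm id}$, $n$, $(\overline u,\overline q)$, $\omega^*$, $v(\omega)$, $\widehat v(\omega)$, $J'(\omega)$, the iteration $\omega_{k+1}=\omega_k-\rho_kJ'(\omega_k)$, $\mu_k=\omega^*-\omega_k$ and $C_j$ be as in the context. If for some $k$ the error has the finite Fourier expansion $\mu_k=\sum_{M\le|j|\le N}a_j^{(k)}e^{ij\theta}$ (integers $N\ge M\ge0$), then $$J'(\omega_k)=-\sum_{M\le|j|\le N}C_ja_j^{(k)}e^{ij\theta}\quad\text{on }\Gamma_{\rm id},$$ and consequently $\mu_{k+1}=\sum_{M\le|j|\le N}a_j^{(k+1)}e^{ij\theta}$ with $$a_j^{(k+1)}=(1-C_j\rho_k)\,a_j^{(k)}\qquad (M\le|j|\le N).$$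
   Context: Setting: $0<R_{\rm id}<R_{\rm d}$; $\Omega=\{(x,y): R_{\rm id}^2<x^2+y^2<R_{\rm d}^2\}$ is an annulus with outer boundary $\Gamma_{\rm d}=\{x^2+y^2=R_{\rm d}^2\}$ and inner boundary $\Gamma_{\rm id}=\{x^2+y^2=R_{\rm id}^2\}$; $(r,\theta)$ are polar coordinates; $n$ is the unit outward normal to $\partial\Omega$ (so $\partial/\partial n=\partial/\partial r$ on $\Gamma_{\rm d}$ and $\partial/\partial n=-\partial/\partial r$ on $\Gamma_{\rm id}$). Given Cauchy data $(\overline u,\overline q)$ on $\Gamma_{\rm d}$. For a boundary value $\omega$ on $\Gamma_{\rm id}$, $v(\omega)$ denotes the solution of the primary problem $-\Delta v=0$ in $\Omega$, $\partial v/\partial n=\overline q$ on $\Gamma_{\rm d}$, $v=\omega$ on $\Gamma_{\rm id}$; $\widehat v(\omega)$ denotes the solution of the adjoint problem $-\Delta \widehat v=0$ in $\Omega$, $\partial\widehat v/\partial n=2(v(\omega)-\overline u)$ on $\Gamma_{\rm d}$, $\widehat v=0$ on $\Gamma_{\rm id}$; and $J'(\omega):=-\partial\widehat v(\omega)/\partial n|_{\Gamma_{\rm id}}$. The exact boundary value $\omega^*$ is assumed to exist, i.e. $v(\omega^* )|_{\Gamma_{\rm d}}=\overline u$. Starting from $\omega_0$ and step sizes $\rho_k>0$, the iteration is $\omega_{k+1}=\omega_k-\rho_kJ'(\omega_k)$ (with exact solution of the boundary value problems), and $\mu_k:=\omega^*-\omega_k$. For integers $j$, $$C_j:=\frac{8R_{\rm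 d}^{2|j|+1}R_{\rm id}^{2|j|-1}}{(R_{\rm id}^{2|j|}+R_{\rm d}^{2|j|})^2}.$$ Functions on $\Gamma_{\rm id}$ may be complex-valued; Fourier expansions are in $e^{ij\theta}$. *)

(* Defs.v *)
From Stdlib Require Import Reals Lra ZArith List.
Open Scope R_scope.

(** Complex numbers as pairs (real part, imaginary part). *)
Definition Cx := (R * R)%type.
Definition Cadd (z w : Cx) : Cx := (fst z + fst w, snd z + snd w).
Definition Copp (z : Cx) : Cx := (- fst z, - snd z).
Definition Csub (z w : Cx) : Cx := Cadd z (Copp w).
Definition Cmul (z w : Cx) : Cx :=
  (fst z * fst w - snd z * snd w, fst z * snd w + snd z * fst w).
Definition Cscale (r : R) (z : Cx) : Cx := (r * fst z, r * snd z).
Definition C0 : Cx := (0, 0).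
Definition Cexpi (j : Z) (th : R) : Cx := (cos (IZR j * th), sin (IZR j * th)).

(** Finite Fourier sum  sum_{M <= |j| <= N} a_j e^{i j theta}. *)
Definition Zrange (N : nat) : list Z :=
  map (fun n => (Z.of_nat n - Z.of_nat N)%Z) (seq 0 (2 * N + 1)).
Definition fsum (M N : nat) (a : Z -> Cx) (th : R) : Cx :=
  fold_right (fun j acc => Cadd (Cmul (a j) (Cexpi j th)) acc) C0
    (filter (fun j => Z.leb (Z.of_nat M) (Z.abs j)) (Zrange N)).

Definition Cj (Rid Rd : R) (j : Z) : R :=
  8 * powerRZ Rd (2 * Z.abs j + 1) * powerRZ Rid (2 * Z.abs j - 1)
  / (powerRZ Rid (2 * Z.abs j) + powerRZ Rd (2 * Z.abs j)) ^ 2.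

Definition annulus (Rid Rd : R) (x y : R) : Prop :=
  Rid ^ 2 < x ^ 2 + y ^ 2 < Rd ^ 2.
Definition cl_annulus (Rid Rd : R) (x y : R) : Prop :=
  Rid ^ 2 <= x ^ 2 + y ^ 2 <= Rd ^ 2.

Definition cont_on (D : R -> R -> Prop) (u : R -> R -> R) : Prop :=
  forall x y, D x y -> forall eps, eps > 0 -> exists del, del > 0 /\
    forall x' y', D x' y' -> Rabs (x' - x) < del -> Rabs (y' - y) < del ->
      Rabs (u x' y' - u x y) < eps.

Definition C2_harmonic (D : R -> R -> Prop) (u : R -> R -> R) : Prop :=
  exists ux uy uxx uxy uyx uyy : R -> R -> R,
    (forall x y, D x y ->
       derivable_pt_lim (fun t => u t y) x (ux x y) /\
       derivable_pt_lim (fun t => u x t) y (uy x y) /\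
       derivable_pt_lim (fun t => ux t y) x (uxx x y) /\
       derivable_pt_lim (fun t => ux x t) y (uxy x y) /\
       derivable_pt_lim (fun t => uy t y) x (uyx x y) /\
       derivable_pt_lim (fun t => uy x t) y (uyy x y) /\
       - (uxx x y + uyy x y) = 0) /\
    cont_on D u /\ cont_on D ux /\ cont_on D uy /\ cont_on D uxx /\
    cont_on D uxy /\ cont_on D uyx /\ cont_on D uyy.

(** Normal derivative (outward normal) of a real function at the point of
    angle th on Gamma_d: d/dr, one-sided limit from inside Omega. *)
Definition dn_outer_R (Rid Rd : R) (u : R -> R -> R) (th l : R) : Prop :=
  limit1_in
    (fun r => (u (r * cos th) (r * sin th) - u (Rd * cos th) (Rd * sin th)) / (r - Rd))
    (fun r => Rid <= r < Rd) l Rd.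

(** Normal derivative (outward normal) on Gamma_id: -d/dr, one-sided limit
    from inside Omega. *)
Definition dn_inner_R (Rid Rd : R) (u : R -> R -> R) (th l : R) : Prop :=
  limit1_in
    (fun r => - ((u (r * cos th) (r * sin th) - u (Rid * cos th) (Rid * sin th)) / (r - Rid)))
    (fun r => Rid < r <= Rd) l Rid.

Definition reF (u : R -> R -> Cx) : R -> R -> R := fun x y => fst (u x y).
Definition imF (u : R -> R -> Cx) : R -> R -> R := fun x y => snd (u x y).

Definition dn_outer (Rid Rd : R) (u : R -> R -> Cx) (th : R) (l : Cx) : Prop :=
  dn_outer_R Rid Rd (reF u) th (fst l) /\ dn_outer_R Rid Rd (imF u) th (snd l).
Definition dn_inner (Rid Rd : R) (u : R -> R -> Cx) (th : R) (l : Cx) : Prop :=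
  dn_inner_R Rid Rd (reF u) th (fst l) /\ dn_inner_R Rid Rd (imF u) th (snd l).

Definition mixed_sol (Rid Rd : R) (g h : R -> Cx) (w : R -> R -> Cx) : Prop :=
  C2_harmonic (annulus Rid Rd) (reF w) /\ C2_harmonic (annulus Rid Rd) (imF w) /\
  cont_on (cl_annulus Rid Rd) (reF w) /\ cont_on (cl_annulus Rid Rd) (imF w) /\
  (forall th, dn_outer Rid Rd w th (g th)) /\
  (forall th, w (Rid * cos th) (Rid * sin th) = h th).

Definition primary_sol (Rid Rd : R) (qbar omega : R -> Cx) (v : R -> R -> Cx) : Prop :=
  mixed_sol Rid Rd qbar omega v.

Definition adjoint_sol (Rid Rd : R) (ubar : R -> Cx) (v vhat : R -> R -> Cx) : Prop :=
  mixed_sol Rid Rd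
    (fun th => Cscale 2 (Csub (v (Rd * cos th) (Rd * sin th)) (ubar th)))
    (fun _ => C0) vhat.

(* Main.v *)
Require Import Defs.
From Stdlib Require Import Reals ZArith List.
From Stdlib Require Import Lra Lia Classical ClassicalEpsilon FunctionalExtensionality.
Open Scope R_scope.

Definition C1 : Cx := (1, 0).
Definition Ci : Cx := (0, 1).
Definition Cnorm2 (z : Cx) : R := fst z * fst z + snd z * snd z.
Definition Cinv (z : Cx) : Cx := (fst z / Cnorm2 z, - snd z / Cnorm2 z).
Definition Cconj (z : Cx) : Cx := (fst z, - snd z).
Fixpoint Cpown (z : Cx) (n : nat) : Cx :=
  match n with O => C1 | S m => Cmul z (Cpown z m) end.

Lemma Cnorm2_pos z : z <> C0 -> 0 < Cnorm2 z.
Proof.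
  destruct z as [a b]; unfold Cnorm2, C0; simpl; intro H.
  destruct (Req_dec a 0); destruct (Req_dec b 0); subst.
  - exfalso; auto.
  - assert (0 < b*b) by (apply Rsqr_pos_lt; auto). nra.
  - assert (0 < a*a) by (apply Rsqr_pos_lt; auto). nra.
  - assert (0 < a*a) by (apply Rsqr_pos_lt; auto). nra.
Qed.

Ltac cx := repeat match goal with z : Cx |- _ => destruct z end;
  unfold Cmul, Cadd, Csub, Copp, Cscale, C0, C1, Ci, Cconj in *; simpl in *.

Lemma Cpair_eq (a b c d : R) : a = c -> b = d -> (a, b) = (c, d).
Proof. intros; subst; reflexivity. Qed.

Lemma dpl_ext f g x l l' : (forall y, f y = g y) -> l = l' ->
  derivable_pt_lim f x l -> derivable_pt_lim g x l'.
Proof.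
  unfold derivable_pt_lim; intros H Hl D eps Heps; subst.
  destruct (D eps Heps) as [del Hd]; exists del; intros; rewrite <- !H; apply Hd; auto.
Qed.

Definition CD (F : R -> Cx) (t : R) (L : Cx) : Prop :=
  derivable_pt_lim (fun s => fst (F s)) t (fst L) /\
  derivable_pt_lim (fun s => snd (F s)) t (snd L).

Lemma CD_ext F G t L L' : (forall s, F s = G s) -> L = L' -> CD F t L -> CD G t L'.
Proof.
  intros H HL [H1 H2]; subst; split; eapply dpl_ext; eauto;
  intro y; simpl; rewrite H; auto.
Qed.

Lemma CD_const c t : CD (fun _ => c) t C0.
Proof. split; simpl; apply derivable_pt_lim_const. Qed.

Lemma CD_affine z0 u t : CD (fun s => Cadd z0 (Cscale s u)) t u.
Proof.
  destruct z0 as [a b]; destruct u as [u1 u2]; split; simpl.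
  - eapply dpl_ext. 3: apply (derivable_pt_lim_plus _ _ t 0 (u1*1) (derivable_pt_lim_const a t)
      (derivable_pt_lim_scal id u1 t 1 (derivable_pt_lim_id t))).
    intro; unfold plus_fct, mult_real_fct, id, Cadd, Cscale, fct_cte; simpl; ring. ring.
  - eapply dpl_ext. 3: apply (derivable_pt_lim_plus _ _ t 0 (u2*1) (derivable_pt_lim_const b t)
      (derivable_pt_lim_scal id u2 t 1 (derivable_pt_lim_id t))).
    intro; unfold plus_fct, mult_real_fct, id, Cadd, Cscale, fct_cte; simpl; ring. ring.
Qed.

Lemma CD_add F G t L K : CD F t L -> CD G t K -> CD (fun s => Cadd (F s) (G s)) t (Cadd L K).
Proof.
  intros [H1 H2] [K1 K2]; split; simpl.
  - eapply dpl_ext. 3: apply (derivable_pt_lim_plus _ _ _ _ _ H1 K1).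
    intro; reflexivity. reflexivity.
  - eapply dpl_ext. 3: apply (derivable_pt_lim_plus _ _ _ _ _ H2 K2).
    intro; reflexivity. reflexivity.
Qed.

Lemma CD_mul F G t L K : CD F t L -> CD G t K ->
  CD (fun s => Cmul (F s) (G s)) t (Cadd (Cmul L (G t)) (Cmul (F t) K)).
Proof.
  intros [H1 H2] [K1 K2]; split; simpl.
  - eapply dpl_ext. 3: apply (derivable_pt_lim_minus _ _ _ _ _
       (derivable_pt_lim_mult _ _ _ _ _ H1 K1) (derivable_pt_lim_mult _ _ _ _ _ H2 K2)).
    intro; reflexivity. ring.
  - eapply dpl_ext. 3: apply (derivable_pt_lim_plus _ _ _ _ _
       (derivable_pt_lim_mult _ _ _ _ _ H1 K2) (derivable_pt_lim_mult _ _ _ _ _ H2 K1)).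
    intro; reflexivity. ring.
Qed.

Lemma CD_scal (c : Cx) F t L : CD F t L -> CD (fun s => Cmul c (F s)) t (Cmul c L).
Proof.
  intro H. eapply CD_ext. 3: apply (CD_mul _ _ _ _ _ (CD_const c t) H).
  intro; reflexivity. cx. apply Cpair_eq; ring.
Qed.

Lemma CD_inv F t L : F t <> C0 -> CD F t L ->
  CD (fun s => Cinv (F s)) t (Copp (Cmul (Cmul (Cinv (F t)) (Cinv (F t))) L)).
Proof.
  intros Hz [H1 H2].
  pose proof (Cnorm2_pos _ Hz) as Hp.
  assert (HN : derivable_pt_lim (fun s => Cnorm2 (F s)) t
     (2 * fst (F t) * fst L + 2 * snd (F t) * snd L)).
  { eapply dpl_ext. 3: apply (derivable_pt_lim_plus _ _ _ _ _
       (derivable_pt_lim_mult _ _ _ _ _ H1 H1) (derivable_pt_lim_mult _ _ _ _ _ H2 H2)).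
    intro; reflexivity. unfold mult_fct; ring. }
  unfold Cinv, Cnorm2 in *; split; simpl.
  - eapply dpl_ext. 3: apply (derivable_pt_lim_div _ _ _ _ _ H1 HN).
    intro; reflexivity. 2: simpl; lra.
    destruct (F t) as [a b]; destruct L as [l1 l2]; simpl in *. unfold Rsqr; field. lra.
  - eapply dpl_ext. 3: apply (derivable_pt_lim_div _ _ _ _ _ (derivable_pt_lim_opp _ _ _ H2) HN).
    intro; unfold opp_fct; simpl; reflexivity. 2: simpl; lra.
    unfold opp_fct; destruct (F t) as [a b]; destruct L as [l1 l2]; simpl in *. unfold Rsqr; field. lra.
Qed.

Lemma CD_pown F t L n : CD F t L ->
  CD (fun s => Cpown (F s) (S n)) t (Cscale (INR (S n)) (Cmul (Cpown (F t) n) L)).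
Proof.
  intro H; induction n.
  - eapply CD_ext. 3: exact H. intro s; simpl; destruct (F s); cx; apply Cpair_eq; ring.
    simpl. cx. apply Cpair_eq; ring.
  - eapply CD_ext. 3: apply (CD_mul _ _ _ _ _ H IHn).
    intro; reflexivity.
    change (Cpown (F t) (S n)) with (Cmul (F t) (Cpown (F t) n)).
    rewrite !S_INR. generalize (Cpown (F t) n); intro P. generalize (INR n); intro r.
    cx. apply Cpair_eq; ring.
Qed.

Definition cont2 (f : R -> R -> R) (x y : R) : Prop :=
  forall eps, eps > 0 -> exists del, del > 0 /\
    forall x' y', Rabs (x' - x) < del -> Rabs (y' - y) < del ->
      Rabs (f x' y' - f x y) < eps.

Lemma cont2_ext f g x y : (forall a b, f a b = g a b) -> cont2 f x y -> cont2 g x y.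
Proof.
  intros H C eps He; destruct (C eps He) as [d [Hd Hx]]; exists d; split; auto.
  intros; rewrite <- !H; auto.
Qed.

Lemma cont2_const c x y : cont2 (fun _ _ => c) x y.
Proof. intros eps He; exists 1; split; [lra|]; intros; unfold Rminus; rewrite Rplus_opp_r, Rabs_R0; lra. Qed.

Lemma cont2_fst x y : cont2 (fun a _ => a) x y.
Proof. intros eps He; exists eps; split; auto. Qed.

Lemma cont2_snd x y : cont2 (fun _ b => b) x y.
Proof. intros eps He; exists eps; split; auto. Qed.

Lemma cont2_plus f g x y : cont2 f x y -> cont2 g x y -> cont2 (fun a b => f a b + g a b) x y.
Proof.
  intros Cf Cg eps He.
  destruct (Cf (eps/2)) as [d1 [Hd1 H1]]; [lra|].
  destruct (Cg (eps/2)) as [d2 [Hd2 H2]]; [lra|].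
  exists (Rmin d1 d2); split. apply Rmin_pos; lra.
  intros a b Ha Hb.
  assert (Rabs (a - x) < d1) by (eapply Rlt_le_trans; [exact Ha| apply Rmin_l]).
  assert (Rabs (a - x) < d2) by (eapply Rlt_le_trans; [exact Ha| apply Rmin_r]).
  assert (Rabs (b - y) < d1) by (eapply Rlt_le_trans; [exact Hb| apply Rmin_l]).
  assert (Rabs (b - y) < d2) by (eapply Rlt_le_trans; [exact Hb| apply Rmin_r]).
  specialize (H1 a b ltac:(auto) ltac:(auto)); specialize (H2 a b ltac:(auto) ltac:(auto)).
  replace (f a b + g a b - (f x y + g x y)) with ((f a b - f x y) + (g a b - g x y)) by ring.
  eapply Rle_lt_trans. apply Rabs_triang. lra.
Qed.

Lemma cont2_comp1 (g : R -> R) f x y : cont2 f x y -> continuity_pt g (f x y) ->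
  cont2 (fun a b => g (f a b)) x y.
Proof.
  intros Cf Cg eps He.
  destruct (Cg eps He) as [al [Hal Hg]].
  destruct (Cf al Hal) as [d [Hd Hf]].
  exists d; split; auto; intros a b Ha Hb.
  destruct (Req_dec (f a b) (f x y)) as [E|E].
  - rewrite E; unfold Rminus; rewrite Rplus_opp_r, Rabs_R0; lra.
  - apply (Hg (f a b)). split. split. exact I. auto. apply Hf; auto.
Qed.

Lemma cpt_id x : continuity_pt id x.
Proof. apply derivable_continuous_pt, derivable_pt_id. Qed.

Lemma cont2_opp f x y : cont2 f x y -> cont2 (fun a b => - f a b) x y.
Proof.
  intro C; apply (cont2_comp1 Ropp f x y C). exact (continuity_pt_opp id _ (cpt_id _)).
Qed.

Lemma cont2_minus f g x y : cont2 f x y -> cont2 g x y -> cont2 (fun a b => f a b - g a b) x y.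
Proof. intros; apply cont2_plus; auto; apply cont2_opp; auto. Qed.

Lemma cont2_sq f x y : cont2 f x y -> cont2 (fun a b => f a b * f a b) x y.
Proof.
  intro C; apply (cont2_comp1 (fun u => u * u) f x y C).
  exact (continuity_pt_mult id id _ (cpt_id _) (cpt_id _)).
Qed.

Lemma cont2_mult f g x y : cont2 f x y -> cont2 g x y -> cont2 (fun a b => f a b * g a b) x y.
Proof.
  intros Cf Cg.
  apply cont2_ext with (f := fun a b => / 4 * ((f a b + g a b) * (f a b + g a b)) +
                                      - / 4 * ((f a b - g a b) * (f a b - g a b))).
  { intros; field. }
  apply cont2_plus.
  - apply (cont2_comp1 (fun u => /4 * u)). apply cont2_sq, cont2_plus; auto.
    exact (continuity_pt_scal id _ _ (cpt_id _)).
  - apply (cont2_comp1 (fun u => - /4 * u)). apply cont2_sq, cont2_minus; auto.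
    exact (continuity_pt_scal id _ _ (cpt_id _)).
Qed.

Lemma cont2_inv f x y : cont2 f x y -> f x y <> 0 -> cont2 (fun a b => / f a b) x y.
Proof.
  intros C H; apply (cont2_comp1 Rinv f x y C).
  apply (continuity_pt_inv id); auto. apply cpt_id.
Qed.

Lemma cont2_div f g x y : cont2 f x y -> cont2 g x y -> g x y <> 0 -> cont2 (fun a b => f a b / g a b) x y.
Proof. intros; unfold Rdiv; apply cont2_mult; auto; apply cont2_inv; auto. Qed.

Definition Ccont2 (F : R -> R -> Cx) x y : Prop :=
  cont2 (fun a b => fst (F a b)) x y /\ cont2 (fun a b => snd (F a b)) x y.

Lemma Ccont2_ext F G x y : (forall a b, F a b = G a b) -> Ccont2 F x y -> Ccont2 G x y.
Proof.
  intros H [C1 C2]; split.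
  apply cont2_ext with (f := fun a b => fst (F a b)); auto; intros; rewrite H; auto.
  apply cont2_ext with (f := fun a b => snd (F a b)); auto; intros; rewrite H; auto.
Qed.

Lemma Ccont2_const c x y : Ccont2 (fun _ _ => c) x y.
Proof. split; apply cont2_const. Qed.

Lemma Ccont2_add F G x y : Ccont2 F x y -> Ccont2 G x y -> Ccont2 (fun a b => Cadd (F a b) (G a b)) x y.
Proof. intros [A B] [C D]; split; simpl; apply cont2_plus; auto. Qed.

Lemma Ccont2_mul F G x y : Ccont2 F x y -> Ccont2 G x y -> Ccont2 (fun a b => Cmul (F a b) (G a b)) x y.
Proof.
  intros [A B] [C D]; split; simpl.
  apply cont2_minus; apply cont2_mult; auto.
  apply cont2_plus; apply cont2_mult; auto.
Qed.

Lemma Ccont2_inv F x y : Ccont2 F x y -> F x y <> C0 -> Ccont2 (fun a b => Cinv (F a b)) x y.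
Proof.
  intros [A B] H; pose proof (Cnorm2_pos _ H) as P; unfold Cnorm2 in P.
  assert (N : cont2 (fun a b => Cnorm2 (F a b)) x y).
  { unfold Cnorm2; apply cont2_plus; apply cont2_mult; auto. }
  split; unfold Cinv; simpl; apply cont2_div; auto; try (unfold Cnorm2; lra).
  apply cont2_opp; auto.
Qed.

Lemma Ccont2_pown F x y n : Ccont2 F x y -> Ccont2 (fun a b => Cpown (F a b) n) x y.
Proof.
  intro C; induction n; simpl. apply Ccont2_const. apply Ccont2_mul; auto.
Qed.

Lemma cont_on_of D u : (forall x y, D x y -> cont2 u x y) -> cont_on D u.
Proof.
  intros H x y Dxy eps He. destruct (H x y Dxy eps He) as [d [Hd Hc]].
  exists d; split; auto.
Qed.

Record Term := mkT { tc : Cx; tcj : bool; tiv : bool; tn : nat }.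

Definition tbase (cj : bool) (x y : R) : Cx := if cj then (x, - y) else (x, y).
Definition tw (t : Term) (x y : R) : Cx :=
  if tiv t then Cinv (tbase (tcj t) x y) else tbase (tcj t) x y.
Definition tval (t : Term) (x y : R) : Cx := Cmul (tc t) (Cpown (tw t x y) (tn t)).

Definition dxT (t : Term) : Term :=
  if tiv t then mkT (Cscale (- INR (tn t)) (tc t)) (tcj t) true (S (tn t))
  else mkT (Cscale (INR (tn t)) (tc t)) (tcj t) false (pred (tn t)).
Definition scT (k : Cx) (t : Term) : Term := mkT (Cmul k (tc t)) (tcj t) (tiv t) (tn t).
Definition dirI (cj : bool) : Cx := if cj then Copp Ci else Ci.
Definition dyT (t : Term) : Term := scT (dirI (tcj t)) (dxT t).

Lemma tval_scT k t x y : tval (scT k t) x y = Cmul k (tval t x y).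
Proof. unfold tval, scT, tw; simpl. cx. apply Cpair_eq; ring. Qed.

Lemma dxT_scT k t x y : tval (dxT (scT k t)) x y = Cmul k (tval (dxT t) x y).
Proof.
  unfold dxT, scT; destruct t as [c cj iv n]; simpl; destruct iv; unfold tval, tw; simpl;
  cx; apply Cpair_eq; ring.
Qed.

Lemma nz_pair x y : (x, y) <> C0 -> x * x + y * y > 0.
Proof. intro H; pose proof (Cnorm2_pos _ H); unfold Cnorm2 in *; simpl in *; lra. Qed.

Lemma tbase_nz cj x y : (x, y) <> C0 -> tbase cj x y <> C0.
Proof.
  intros H E; apply H; destruct cj; unfold tbase, C0 in *; inversion E; f_equal; lra.
Qed.

Lemma Cinv_nz z : z <> C0 -> Cinv z <> C0.
Proof.
  intros H E; pose proof (Cnorm2_pos _ H) as P; destruct z as [a b]; unfold Cinv, Cnorm2, C0 in *; simpl in *.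
  inversion E as [[E1 E2]].
  assert (a = 0). { apply (Rmult_eq_reg_r (/ (a*a+b*b))); [|apply Rinv_neq_0_compat; lra]. unfold Rdiv in E1; lra. }
  assert (b = 0). { apply (Rmult_eq_reg_r (/ (a*a+b*b))); [|apply Rinv_neq_0_compat; lra]. unfold Rdiv in E2; lra. }
  subst; lra.
Qed.

Lemma CD_term t x0 y0 u1 u2 s0 :
  (x0 + s0 * u1, y0 + s0 * u2) <> C0 ->
  CD (fun s => tval t (x0 + s * u1) (y0 + s * u2)) s0
     (Cadd (Cscale u1 (tval (dxT t) (x0 + s0 * u1) (y0 + s0 * u2)))
           (Cscale u2 (tval (dyT t) (x0 + s0 * u1) (y0 + s0 * u2)))).
Proof.
  intro Hnz.
  destruct t as [c cj iv n].
  set (du := if cj then (u1, - u2) else (u1, u2)).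
  assert (HB : CD (fun s => tbase cj (x0 + s * u1) (y0 + s * u2)) s0 du).
  { eapply CD_ext. 3: apply (CD_affine (tbase cj x0 y0) du s0).
    intro s; unfold du, tbase; destruct cj; cx; apply Cpair_eq; ring. reflexivity. }
  set (X := x0 + s0 * u1) in *; set (Y := y0 + s0 * u2) in *.
  assert (Hb0 := tbase_nz cj _ _ Hnz).
  assert (HW : CD (fun s => tw (mkT c cj iv n) (x0 + s * u1) (y0 + s * u2)) s0
     (if iv then Copp (Cmul (Cmul (Cinv (tbase cj X Y)) (Cinv (tbase cj X Y))) du) else du)).
  { unfold tw; simpl; destruct iv. exact (CD_inv (fun s => tbase cj (x0 + s * u1) (y0 + s * u2)) s0 du Hb0 HB). auto. }
  destruct n as [|m].
  - eapply CD_ext. 3: apply CD_const. intro; unfold tval; simpl; reflexivity.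
    unfold dyT, dxT, scT, tval, tw; destruct iv; simpl; 
    cx; apply Cpair_eq; ring.
  - eapply CD_ext. 3: apply (CD_scal c _ _ _ (CD_pown _ _ _ m HW)).
    intro; unfold tval; simpl; reflexivity.
    unfold dyT, dxT, scT, tval, tw, dirI, du; cbn [tc tcj tiv tn pred Cpown].
    rewrite S_INR. generalize (INR m); intro r. subst X Y.
    destruct iv; cbn [tc tcj tiv tn pred Cpown].
    + generalize (Cpown (Cinv (tbase cj (x0 + s0 * u1) (y0 + s0 * u2))) m); intro P.
      generalize (Cinv (tbase cj (x0 + s0 * u1) (y0 + s0 * u2))); intro w.
      destruct cj; cx; apply Cpair_eq; ring.
    + generalize (Cpown (tbase cj (x0 + s0 * u1) (y0 + s0 * u2)) m); intro P.
      destruct cj; cx; apply Cpair_eq; ring.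
Qed.

Lemma Ccont2_term t x y : (x, y) <> C0 -> Ccont2 (tval t) x y.
Proof.
  intro H; unfold tval.
  apply Ccont2_mul. apply Ccont2_const.
  apply Ccont2_pown.
  assert (Cb : Ccont2 (fun a b => tbase (tcj t) a b) x y).
  { destruct (tcj t); split; simpl. apply cont2_fst. apply cont2_opp, cont2_snd.
    apply cont2_fst. apply cont2_snd. }
  unfold tw; destruct (tiv t). apply Ccont2_inv; auto. apply tbase_nz; auto. auto.
Qed.

Definition tsum (ts : list Term) (x y : R) : Cx :=
  fold_right (fun t acc => Cadd (tval t x y) acc) C0 ts.
Record Fn := mkF { fts : list Term; fg : Cx }.
Definition Lval (x y : R) : R := ln (x * x + y * y).
Definition fval (f : Fn) (x y : R) : Cx := Cadd (tsum (fts f) x y) (Cscale (Lval x y) (fg f)).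
Definition logx (g : Cx) : list Term := mkT g false true 1 :: mkT g true true 1 :: nil.
Definition logy (g : Cx) : list Term :=
  mkT (Cmul Ci g) false true 1 :: mkT (Cmul (Copp Ci) g) true true 1 :: nil.
Definition dxF (f : Fn) : Fn := mkF (map dxT (fts f) ++ logx (fg f)) C0.
Definition dyF (f : Fn) : Fn := mkF (map dyT (fts f) ++ logy (fg f)) C0.

Lemma tsum_app l1 l2 x y : tsum (l1 ++ l2) x y = Cadd (tsum l1 x y) (tsum l2 x y).
Proof.
  induction l1; simpl. destruct (tsum l2 x y); cx; apply Cpair_eq; ring. rewrite IHl1. generalize (tval a x y); intro.
  cx. apply Cpair_eq; ring.
Qed.

Lemma logx_val g x y : (x, y) <> C0 ->
  tsum (logx g) x y = Cscale (2 * x / (x * x + y * y)) g.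
Proof.
  intro H; pose proof (nz_pair _ _ H).
  unfold logx, tsum, tval, tw, tbase, Cinv, Cnorm2; simpl.
  destruct g as [a b]; unfold Cmul, Cadd, Cscale, C1, C0; simpl. apply Cpair_eq; field; lra.
Qed.

Lemma logy_val g x y : (x, y) <> C0 ->
  tsum (logy g) x y = Cscale (2 * y / (x * x + y * y)) g.
Proof.
  intro H; pose proof (nz_pair _ _ H).
  unfold logy, tsum, tval, tw, tbase, Cinv, Cnorm2; simpl.
  destruct g as [a b]; unfold Cmul, Cadd, Cscale, C1, C0, Ci, Copp; simpl. apply Cpair_eq; field; lra.
Qed.

Lemma dpl_lin x0 u s0 : derivable_pt_lim (fun s => x0 + s * u) s0 u.
Proof.
  pose proof (CD_affine (x0, 0) (u, 0) s0) as [H _]. eapply dpl_ext. 3: exact H.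
  intro; simpl; ring. reflexivity.
Qed.

Lemma dpl_L x0 y0 u1 u2 s0 : (x0 + s0 * u1, y0 + s0 * u2) <> C0 ->
  derivable_pt_lim (fun s => Lval (x0 + s * u1) (y0 + s * u2)) s0
    (u1 * (2 * (x0 + s0 * u1) / ((x0 + s0 * u1) * (x0 + s0 * u1) + (y0 + s0 * u2) * (y0 + s0 * u2)))
     + u2 * (2 * (y0 + s0 * u2) / ((x0 + s0 * u1) * (x0 + s0 * u1) + (y0 + s0 * u2) * (y0 + s0 * u2)))).
Proof.
  intro H; pose proof (nz_pair _ _ H) as P.
  assert (Hq : derivable_pt_lim (fun s => (x0 + s * u1) * (x0 + s * u1) + (y0 + s * u2) * (y0 + s * u2)) s0
     (2 * (x0 + s0 * u1) * u1 + 2 * (y0 + s0 * u2) * u2)).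
  { eapply dpl_ext. 3: apply (derivable_pt_lim_plus _ _ _ _ _
       (derivable_pt_lim_mult _ _ _ _ _ (dpl_lin x0 u1 s0) (dpl_lin x0 u1 s0))
       (derivable_pt_lim_mult _ _ _ _ _ (dpl_lin y0 u2 s0) (dpl_lin y0 u2 s0))).
    intro; reflexivity. unfold mult_fct; ring. }
  eapply dpl_ext. 3: apply (derivable_pt_lim_comp _ ln _ _ _ Hq (derivable_pt_lim_ln _ P)).
  intro; unfold comp, Lval; reflexivity. field. lra.
Qed.

Lemma CD_tsum ts x0 y0 u1 u2 s0 :
  (x0 + s0 * u1, y0 + s0 * u2) <> C0 ->
  CD (fun s => tsum ts (x0 + s * u1) (y0 + s * u2)) s0
     (Cadd (Cscale u1 (tsum (map dxT ts) (x0 + s0 * u1) (y0 + s0 * u2)))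
           (Cscale u2 (tsum (map dyT ts) (x0 + s0 * u1) (y0 + s0 * u2)))).
Proof.
  intro H; induction ts as [|t ts IH]; simpl.
  - eapply CD_ext. 3: apply CD_const. reflexivity. cx; apply Cpair_eq; ring.
  - eapply CD_ext. 3: apply (CD_add _ _ _ _ _ (CD_term t _ _ _ _ _ H) IH). reflexivity.
    generalize (tval (dxT t) (x0 + s0 * u1) (y0 + s0 * u2)) (tval (dyT t) (x0 + s0 * u1) (y0 + s0 * u2))
      (tsum (map dxT ts) (x0 + s0 * u1) (y0 + s0 * u2)) (tsum (map dyT ts) (x0 + s0 * u1) (y0 + s0 * u2)).
    intros; cx; apply Cpair_eq; ring.
Qed.

Lemma CD_fval f x0 y0 u1 u2 s0 :
  (x0 + s0 * u1, y0 + s0 * u2) <> C0 ->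
  CD (fun s => fval f (x0 + s * u1) (y0 + s * u2)) s0
     (Cadd (Cscale u1 (fval (dxF f) (x0 + s0 * u1) (y0 + s0 * u2)))
           (Cscale u2 (fval (dyF f) (x0 + s0 * u1) (y0 + s0 * u2)))).
Proof.
  intro H. destruct f as [ts g].
  assert (HL : CD (fun s => Cscale (Lval (x0 + s * u1) (y0 + s * u2)) g) s0
     (Cscale (u1 * (2 * (x0 + s0 * u1) / ((x0 + s0 * u1) * (x0 + s0 * u1) + (y0 + s0 * u2) * (y0 + s0 * u2)))
     + u2 * (2 * (y0 + s0 * u2) / ((x0 + s0 * u1) * (x0 + s0 * u1) + (y0 + s0 * u2) * (y0 + s0 * u2)))) g)).
  { destruct g as [a b]; pose proof (dpl_L _ _ _ _ _ H) as D; split; simpl.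
    - eapply dpl_ext. 3: apply (derivable_pt_lim_mult _ _ _ _ _ D (derivable_pt_lim_const a s0)).
      intro; unfold mult_fct, fct_cte; reflexivity. unfold fct_cte; ring.
    - eapply dpl_ext. 3: apply (derivable_pt_lim_mult _ _ _ _ _ D (derivable_pt_lim_const b s0)).
      intro; unfold mult_fct, fct_cte; reflexivity. unfold fct_cte; ring. }
  eapply CD_ext. 3: apply (CD_add _ _ _ _ _ (CD_tsum ts _ _ _ _ _ H) HL). reflexivity.
  unfold fval, dxF, dyF; simpl. rewrite !tsum_app, logx_val, logy_val; auto.
  generalize (tsum (map dxT ts) (x0 + s0 * u1) (y0 + s0 * u2)) (tsum (map dyT ts) (x0 + s0 * u1) (y0 + s0 * u2)).
  intros; cx; apply Cpair_eq; ring.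
Qed.

Lemma Ccont2_tsum ts x y : (x, y) <> C0 -> Ccont2 (tsum ts) x y.
Proof.
  intro H; induction ts; simpl. apply Ccont2_const.
  apply (Ccont2_add (tval a) (tsum ts)); auto. apply Ccont2_term; auto.
Qed.

Lemma Ccont2_fval f x y : (x, y) <> C0 -> Ccont2 (fval f) x y.
Proof.
  intro H; pose proof (nz_pair _ _ H) as P. unfold fval.
  apply (Ccont2_add (tsum (fts f)) (fun a b => Cscale (Lval a b) (fg f))). apply Ccont2_tsum; auto.
  assert (CL : cont2 Lval x y).
  { unfold Lval. apply (cont2_comp1 ln (fun a b => a * a + b * b)).
    apply cont2_plus; apply cont2_mult; try apply cont2_fst; apply cont2_snd.
    apply derivable_continuous_pt. exists (/ (x*x+y*y)). apply derivable_pt_lim_ln; lra. }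
  split; simpl; apply cont2_mult; auto; apply cont2_const.
Qed.

Lemma dyT_sc t x y : tval (dyT (scT (dirI (tcj t)) t)) x y = Copp (tval (dxT t) x y).
Proof.
  unfold dyT at 1. rewrite tval_scT. simpl tcj. rewrite dxT_scT.
  generalize (tval (dxT t) x y); intro. destruct (tcj t); unfold dirI; cx; apply Cpair_eq; ring.
Qed.

Lemma lap_term t x y : Cadd (tval (dxT (dxT t)) x y) (tval (dyT (dyT t)) x y) = C0.
Proof.
  assert (E : tcj (dxT t) = tcj t) by (unfold dxT; destruct (tiv t); reflexivity).
  unfold dyT at 2. rewrite <- E. rewrite dyT_sc.
  generalize (tval (dxT (dxT t)) x y); intro; cx; apply Cpair_eq; ring.
Qed.

Lemma lap_fval f x y :
  Cadd (fval (dxF (dxF f)) x y) (fval (dyF (dyF f)) x y) = C0.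
Proof.
  destruct f as [ts g]; unfold fval, dxF, dyF; simpl.
  rewrite !map_app, !tsum_app.
  assert (A : Cadd (tsum (map dxT (map dxT ts)) x y) (tsum (map dyT (map dyT ts)) x y) = C0).
  { induction ts as [|t ts IH]; simpl. cx; apply Cpair_eq; ring.
    pose proof (lap_term t x y) as L.
    revert IH L. generalize (tval (dxT (dxT t)) x y) (tval (dyT (dyT t)) x y)
      (tsum (map dxT (map dxT ts)) x y) (tsum (map dyT (map dyT ts)) x y).
    intros; cx; inversion IH; inversion L; apply Cpair_eq; lra. }
  assert (B : Cadd (tsum (map dxT (logx g)) x y) (tsum (map dyT (logy g)) x y) = C0).
  { unfold logx, logy; simpl.
    pose proof (dyT_sc (mkT g false true 1) x y) as D1.
    pose proof (dyT_sc (mkT g true true 1) x y) as D2.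
    simpl in D1, D2. unfold dirI in D1, D2. unfold scT in D1, D2; simpl in D1, D2; rewrite D1, D2.
    generalize (tval (dxT (mkT g false true 1)) x y) (tval (dxT (mkT g true true 1)) x y).
    intros; cx; apply Cpair_eq; ring. }
  assert (Z1 : tsum (logx C0) x y = C0).
  { unfold logx, tsum, tval; simpl. cx. apply Cpair_eq; ring. }
  assert (Z2 : tsum (logy C0) x y = C0).
  { unfold logy, tsum, tval; simpl. cx. apply Cpair_eq; ring. }
  rewrite Z1, Z2. revert A B.
  generalize (tsum (map dxT (map dxT ts)) x y) (tsum (map dyT (map dyT ts)) x y)
    (tsum (map dxT (logx g)) x y) (tsum (map dyT (logy g)) x y).
  intros; cx. injection A as A1 A2; injection B as B1 B2. apply Cpair_eq; nra.
Qed.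

Lemma CDx f x y : (x, y) <> C0 -> CD (fun t => fval f t y) x (fval (dxF f) x y).
Proof.
  intro H. assert (H' : (0 + x * 1, y + x * 0) <> C0) by (replace (0 + x * 1) with x by ring;
    replace (y + x * 0) with y by ring; auto).
  eapply CD_ext. 3: apply (CD_fval f 0 y 1 0 x H').
  intro s; cbv beta; replace (0 + s * 1) with s by ring; replace (y + s * 0) with y by ring; reflexivity.
  replace (0 + x * 1) with x by ring; replace (y + x * 0) with y by ring.
  generalize (fval (dxF f) x y) (fval (dyF f) x y); intros; cx; apply Cpair_eq; ring.
Qed.

Lemma CDy f x y : (x, y) <> C0 -> CD (fun t => fval f x t) y (fval (dyF f) x y).
Proof.
  intro H. assert (H' : (x + y * 0, 0 + y * 1) <> C0) by (replace (0 + y * 1) with y by ring;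
    replace (x + y * 0) with x by ring; auto).
  eapply CD_ext. 3: apply (CD_fval f x 0 0 1 y H').
  intro s; cbv beta; replace (0 + s * 1) with s by ring; replace (x + s * 0) with x by ring; reflexivity.
  replace (0 + y * 1) with y by ring; replace (x + y * 0) with x by ring.
  generalize (fval (dxF f) x y) (fval (dyF f) x y); intros; cx; apply Cpair_eq; ring.
Qed.

Lemma annulus_nz Rid Rd x y : annulus Rid Rd x y -> (x, y) <> C0.
Proof.
  unfold annulus; intros [A B] E; inversion E; subst. simpl in A.
  assert (0 <= Rid ^ 2) by (simpl; nra). lra.
Qed.

Lemma cl_annulus_nz Rid Rd x y : 0 < Rid -> cl_annulus Rid Rd x y -> (x, y) <> C0.
Proof.
  unfold cl_annulus; intros P [A B] E; inversion E; subst. simpl in A.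
  assert (0 < Rid * (Rid * 1)) by (apply Rmult_lt_0_compat; lra). lra.
Qed.

Lemma harm_re Rid Rd f : C2_harmonic (annulus Rid Rd) (reF (fval f)).
Proof.
  exists (reF (fval (dxF f))), (reF (fval (dyF f))), (reF (fval (dxF (dxF f)))),
    (reF (fval (dyF (dxF f)))), (reF (fval (dxF (dyF f)))), (reF (fval (dyF (dyF f)))).
  split.
  - intros x y A; pose proof (annulus_nz _ _ _ _ A) as N; unfold reF.
    split; [exact (proj1 (CDx f x y N))|].
    split; [exact (proj1 (CDy f x y N))|].
    split; [exact (proj1 (CDx (dxF f) x y N))|].
    split; [exact (proj1 (CDy (dxF f) x y N))|].
    split; [exact (proj1 (CDx (dyF f) x y N))|].
    split; [exact (proj1 (CDy (dyF f) x y N))|].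
    pose proof (lap_fval f x y) as L. destruct (fval (dxF (dxF f)) x y), (fval (dyF (dyF f)) x y).
    unfold Cadd, C0 in L; simpl in *. injection L as L1 L2; lra.
  - repeat (split; [apply cont_on_of; intros x y A; apply Ccont2_fval; eapply annulus_nz; eauto|]).
    apply cont_on_of; intros x y A; apply Ccont2_fval; eapply annulus_nz; eauto.
Qed.

Lemma harm_im Rid Rd f : C2_harmonic (annulus Rid Rd) (imF (fval f)).
Proof.
  exists (imF (fval (dxF f))), (imF (fval (dyF f))), (imF (fval (dxF (dxF f)))),
    (imF (fval (dyF (dxF f)))), (imF (fval (dxF (dyF f)))), (imF (fval (dyF (dyF f)))).
  split.
  - intros x y A; pose proof (annulus_nz _ _ _ _ A) as N; unfold imF.
    split; [exact (proj2 (CDx f x y N))|].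
    split; [exact (proj2 (CDy f x y N))|].
    split; [exact (proj2 (CDx (dxF f) x y N))|].
    split; [exact (proj2 (CDy (dxF f) x y N))|].
    split; [exact (proj2 (CDx (dyF f) x y N))|].
    split; [exact (proj2 (CDy (dyF f) x y N))|].
    pose proof (lap_fval f x y) as L. destruct (fval (dxF (dxF f)) x y), (fval (dyF (dyF f)) x y).
    unfold Cadd, C0 in L; simpl in *. injection L as L1 L2; lra.
  - repeat (split; [apply cont_on_of; intros x y A; apply Ccont2_fval; eapply annulus_nz; eauto|]).
    apply cont_on_of; intros x y A; apply Ccont2_fval; eapply annulus_nz; eauto.
Qed.

Lemma cont_cl_re Rid Rd f : 0 < Rid -> cont_on (cl_annulus Rid Rd) (reF (fval f)).
Proof. intro; apply cont_on_of; intros x y A; apply Ccont2_fval; eapply cl_annulus_nz; eauto. Qed.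
Lemma cont_cl_im Rid Rd f : 0 < Rid -> cont_on (cl_annulus Rid Rd) (imF (fval f)).
Proof. intro; apply cont_on_of; intros x y A; apply Ccont2_fval; eapply cl_annulus_nz; eauto. Qed.

Lemma cont2_pt_y f x y : cont2 f x y -> continuity_pt (fun t => f x t) y.
Proof.
  intros C eps He; destruct (C eps He) as [d [Hd H]]; exists d; split; auto.
  intros t [_ Ht]; simpl in *; unfold R_dist in *. apply H; auto.
  unfold Rminus; rewrite Rplus_opp_r, Rabs_R0; lra.
Qed.

Lemma cont2_pt_x f x y : cont2 f x y -> continuity_pt (fun t => f t y) x.
Proof.
  intros C eps He; destruct (C eps He) as [d [Hd H]]; exists d; split; auto.
  intros t [_ Ht]; simpl in *; unfold R_dist in *. apply H; auto.
  unfold Rminus; rewrite Rplus_opp_r, Rabs_R0; lra.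
Qed.

Lemma cluster_in (u : nat -> R) c d l : (forall n, c <= u n <= d) -> ValAdh u l -> c <= l <= d.
Proof.
  intros Hu Hl. split.
  - destruct (Rle_dec c l); auto. exfalso.
    assert (P : 0 < c - l) by lra.
    destruct (Hl (disc l (mkposreal _ P)) 0%nat) as [p [_ Hp]].
    { exists (mkposreal _ P); intros y Hy; exact Hy. }
    unfold disc in Hp; simpl in Hp. specialize (Hu p). apply Rabs_def2 in Hp. lra.
  - destruct (Rle_dec l d); auto. exfalso.
    assert (P : 0 < l - d) by lra.
    destruct (Hl (disc l (mkposreal _ P)) 0%nat) as [p [_ Hp]].
    { exists (mkposreal _ P); intros y Hy; exact Hy. }
    unfold disc in Hp; simpl in Hp. specialize (Hu p). apply Rabs_def2 in Hp. lra.
Qed.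

Lemma tube f x0 c d M eps : (forall x y, cont2 f x y) -> c <= d -> eps > 0 ->
  (forall y, c <= y <= d -> f x0 y <= M) ->
  exists del, del > 0 /\ forall x y, Rabs (x - x0) < del -> c <= y <= d -> f x y < M + eps.
Proof.
  intros Cf Hcd He HM.
  apply NNPP; intro Hn.
  assert (Hs : forall n : nat, exists p : R * R, Rabs (fst p - x0) < / (INR n + 1) /\
      c <= snd p <= d /\ f (fst p) (snd p) >= M + eps).
  { intro n. apply NNPP; intro Hn2. apply Hn. exists (/ (INR n + 1)). split.
    apply Rlt_gt, Rinv_0_lt_compat. pose proof (pos_INR n); lra.
    intros x y Hx Hy. apply Rnot_le_lt; intro Hle. apply Hn2. exists (x, y); simpl; repeat split; auto; lra. }
  set (sq := fun n => proj1_sig (constructive_indefinite_description _ (Hs n))).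
  assert (Hsq : forall n, Rabs (fst (sq n) - x0) < / (INR n + 1) /\ c <= snd (sq n) <= d /\
     f (fst (sq n)) (snd (sq n)) >= M + eps).
  { intro n; unfold sq; destruct (constructive_indefinite_description _ (Hs n)); simpl; auto. }
  destruct (Bolzano_Weierstrass (fun n => snd (sq n)) (fun y => c <= y <= d) (compact_P3 c d))
    as [l Hl]. { intro n; apply Hsq. }
  assert (Hlcd : c <= l <= d) by (apply (cluster_in (fun n => snd (sq n))); auto; intro; apply Hsq).
  destruct (Cf x0 l eps He) as [del [Hdel Hc]].
  destruct (archimed (/ del)) as [Ha _].
  assert (HN : exists N : nat, / (INR N + 1) < del).
  { exists (Z.to_nat (up (/ del))).
    rewrite INR_IZR_INZ, Z2Nat.id.
    2:{ apply le_IZR. pose proof (Rinv_0_lt_compat del Hdel). simpl; lra. }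
    apply (Rmult_lt_reg_l (IZR (up (/ del)) + 1)).
    pose proof (Rinv_0_lt_compat del Hdel); lra.
    rewrite Rinv_r. 2: pose proof (Rinv_0_lt_compat del Hdel); lra.
    apply (Rmult_lt_reg_r (/ del)). apply Rinv_0_lt_compat; lra.
    rewrite Rmult_assoc, Rinv_r, Rmult_1_r, Rmult_1_l by lra. lra. }
  destruct HN as [N HN].
  destruct (Hl (disc l (mkposreal _ Hdel)) N) as [p [Hp1 Hp2]].
  { exists (mkposreal _ Hdel); intros y Hy; exact Hy. }
  unfold disc in Hp2; simpl in Hp2.
  destruct (Hsq p) as [Q1 [Q2 Q3]].
  assert (Hx : Rabs (fst (sq p) - x0) < del).
  { eapply Rlt_le_trans. exact Q1. eapply Rle_trans. 2: apply Rlt_le, HN.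
    apply Rinv_le_contravar. pose proof (pos_INR N); lra.
    apply le_INR in Hp1; lra. }
  specialize (Hc _ _ Hx Hp2). specialize (HM l Hlcd).
  apply Rabs_def2 in Hc. lra.
Qed.

Lemma EVT2 f a b c d : (forall x y, cont2 f x y) -> a <= b -> c <= d ->
  exists x0 y0, a <= x0 <= b /\ c <= y0 <= d /\
    forall x y, a <= x <= b -> c <= y <= d -> f x y <= f x0 y0.
Proof.
  intros Cf Hab Hcd.
  assert (Hy : forall x, exists y, c <= y <= d /\ forall t, c <= t <= d -> f x t <= f x y).
  { intro x. destruct (continuity_ab_maj (fun t => f x t) c d Hcd) as [y [H1 H2]].
    intros; apply cont2_pt_y; auto. exists y; split; auto. }
  set (ym := fun x => proj1_sig (constructive_indefinite_description _ (Hy x))).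
  assert (Hym : forall x, c <= ym x <= d /\ forall t, c <= t <= d -> f x t <= f x (ym x)).
  { intro x; unfold ym; destruct (constructive_indefinite_description _ (Hy x)); simpl; auto. }
  set (g := fun x => f x (ym x)).
  assert (Cg : forall x0, continuity_pt g x0).
  { intros x0 eps He.
    destruct (Cf x0 (ym x0) eps He) as [d1 [Hd1 C1]].
    destruct (tube f x0 c d (g x0) eps Cf Hcd He) as [d2 [Hd2 C2]].
    { intros; apply Hym; auto. }
    exists (Rmin d1 d2); split. apply Rmin_pos; lra.
    intros x [_ Hx]; simpl in *; unfold R_dist in *.
    assert (Hx1 : Rabs (x - x0) < d1) by (eapply Rlt_le_trans; [exact Hx|apply Rmin_l]).
    assert (Hx2 : Rabs (x - x0) < d2) by (eapply Rlt_le_trans; [exact Hx|apply Rmin_r]).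
    assert (A1 : Rabs (f x (ym x0) - f x0 (ym x0)) < eps).
    { apply C1; auto. unfold Rminus; rewrite Rplus_opp_r, Rabs_R0; lra. }
    assert (A2 : g x < g x0 + eps) by (apply C2; auto; apply Hym).
    assert (A3 : f x (ym x0) <= g x) by (apply Hym; apply Hym).
    unfold g in *. apply Rabs_def2 in A1. apply Rabs_def1; lra. }
  destruct (continuity_ab_maj g a b Hab) as [x0 [H1 H2]]. { intros; apply Cg. }
  exists x0, (ym x0). split; auto. split. apply Hym.
  intros x y Hx Hy'. eapply Rle_trans. apply (proj2 (Hym x)); auto. apply H1; auto.
Qed.

Lemma polar_rep x y : 0 < x * x + y * y -> exists r th,
  r = sqrt (x * x + y * y) /\ 0 <= th <= 2 * PI /\ x = r * cos th /\ y = r * sin th.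
Proof.
  intro P. set (r := sqrt (x * x + y * y)).
  assert (Hr : 0 < r) by (apply sqrt_lt_R0; auto).
  assert (Hr2 : r * r = x * x + y * y) by (apply sqrt_sqrt; lra).
  assert (Hb : -1 <= x / r <= 1).
  { assert (x * x <= r * r) by nra.
    split; apply (Rmult_le_reg_r r); auto; unfold Rdiv; rewrite Rmult_assoc, Rinv_l, Rmult_1_r by lra; nra. }
  set (t0 := acos (x / r)).
  assert (Ct : cos t0 = x / r) by (apply cos_acos; auto).
  assert (St : sin t0 = Rabs y / r).
  { unfold t0; rewrite sin_acos by auto. apply sqrt_lem_1.
    - unfold Rsqr. assert ((x/r)*(x/r) <= 1) by nra. lra.
    - unfold Rdiv; apply Rmult_le_pos. apply Rabs_pos. left; apply Rinv_0_lt_compat; auto.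
    - unfold Rsqr, Rdiv.
      assert (A : Rabs y * Rabs y = y * y) by (rewrite <- Rabs_mult; apply Rabs_right; nra).
      replace (Rabs y * / r * (Rabs y * / r)) with ((Rabs y * Rabs y) / (r * r)) by (field; lra).
      replace (x * / r * (x * / r)) with ((x * x) / (r * r)) by (field; lra).
      rewrite A, Hr2. field. lra. }
  pose proof (acos_bound (x / r)) as Bt. fold t0 in Bt.
  pose proof PI_RGT_0.
  destruct (Rle_dec 0 y) as [Hy|Hy].
  - exists r, t0. repeat split; auto; try lra.
    + rewrite Ct; field; lra.
    + rewrite St, Rabs_right by lra; field; lra.
  - exists r, (2 * PI - t0). repeat split; auto; try lra.
    + rewrite cos_minus, cos_2PI, sin_2PI, Ct; field; lra.
    + rewrite sin_minus, cos_2PI, sin_2PI, St, Rabs_left by lra; field; lra.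
Qed.

Lemma sdt g g1 g2 x0 del : del > 0 ->
  (forall t, Rabs (t - x0) < del -> derivable_pt_lim g t (g1 t)) ->
  derivable_pt_lim g1 x0 g2 ->
  (forall t, Rabs (t - x0) < del -> g t <= g x0) -> g2 <= 0.
Proof.
  intros Hd Hg Hg1 Hmax.
  assert (Z : g1 x0 = 0).
  { assert (D0 : derivable_pt_lim g x0 (g1 x0)) by (apply Hg; unfold Rminus; rewrite Rplus_opp_r, Rabs_R0; lra).
    pose proof (deriv_maximum g (x0 - del) (x0 + del) x0 (exist _ (g1 x0) D0)) as E.
    simpl in E. apply E; try lra. intros t H1 H2; apply Hmax. apply Rabs_def1; lra. }
  apply Rnot_lt_le; intro Hpos.
  destruct (Hg1 (g2 / 2)) as [dl Hdl]; [lra|].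
  set (h0 := Rmin dl del / 2).
  assert (Hh0 : 0 < h0 /\ h0 < dl /\ h0 < del).
  { unfold h0; pose proof (cond_pos dl); pose proof (Rmin_l dl del); pose proof (Rmin_r dl del).
    assert (0 < Rmin dl del) by (apply Rmin_pos; lra). lra. }
  destruct (MVT_cor2 g g1 x0 (x0 + h0)) as [c [Hc1 Hc2]]. lra.
  { intros c Hc; apply Hg. apply Rabs_def1; lra. }
  assert (Hpc : g1 c > 0).
  { specialize (Hdl (c - x0)). rewrite Z in Hdl.
    replace (x0 + (c - x0)) with c in Hdl by ring.
    assert (Q : Rabs ((g1 c - 0) / (c - x0) - g2) < g2 / 2).
    { apply Hdl. lra. rewrite Rabs_right; lra. }
    apply Rabs_def2 in Q. destruct Q as [Q1 Q2].
    assert (0 < (g1 c - 0) / (c - x0)) by lra.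
    unfold Rdiv in H. replace (g1 c - 0) with (g1 c) in H by ring.
    apply (Rmult_lt_reg_r (/ (c - x0))). apply Rinv_0_lt_compat; lra. lra. }
  assert (g (x0 + h0) <= g x0) by (apply Hmax; rewrite Rabs_right; lra).
  assert (0 < g1 c * (x0 + h0 - x0)) by (apply Rmult_lt_0_compat; lra). lra.
Qed.

Lemma lim_nonneg F a b l : a < b -> limit1_in F (fun r => a <= r < b) l b ->
  (forall r, a <= r < b -> 0 <= F r) -> 0 <= l.
Proof.
  intros Hab HL HF. apply Rnot_lt_le; intro Hl.
  destruct (HL (- l)) as [al [Hal Ha]]; [lra|].
  set (r := Rmax a (b - al / 2)).
  assert (Hr : a <= r < b /\ Rabs (r - b) < al).
  { unfold r; unfold Rmax; destruct (Rle_dec a (b - al/2)); split; try split; try lra;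
    apply Rabs_def1; lra. }
  destruct Hr as [Hr1 Hr2].
  specialize (Ha r (conj Hr1 Hr2)). simpl in Ha; unfold R_dist in Ha.
  specialize (HF r Hr1). apply Rabs_def2 in Ha. lra.
Qed.

Lemma lim_of_deriv phi R0 d (D : R -> Prop) : (forall r, D r -> r <> R0) ->
  derivable_pt_lim phi R0 d ->
  limit1_in (fun r => (phi r - phi R0) / (r - R0)) D d R0.
Proof.
  intros HD Hd eps He. destruct (Hd eps He) as [del Hdel].
  exists del; split. apply cond_pos.
  intros r [Dr Hr]; simpl in *; unfold R_dist in *.
  specialize (Hdel (r - R0)). replace (R0 + (r - R0)) with r in Hdel by ring.
  apply Hdel. specialize (HD r Dr); lra. auto.
Qed.

Lemma limit1_ext F G D l x0 : (forall r, D r -> F r = G r) -> limit1_in F D l x0 -> limit1_in G D l x0.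
Proof.
  intros H L eps He; destruct (L eps He) as [a [Ha Hb]]; exists a; split; auto.
  intros r [Dr Hr]; rewrite <- H; auto.
Qed.

Lemma cont2_compD D u P1 P2 a b : cont_on D u -> (forall a b, D (P1 a b) (P2 a b)) ->
  cont2 P1 a b -> cont2 P2 a b -> cont2 (fun a b => u (P1 a b) (P2 a b)) a b.
Proof.
  intros Cu HD C1 C2 eps He.
  destruct (Cu _ _ (HD a b) eps He) as [d [Hd Hc]].
  destruct (C1 d Hd) as [d1 [Hd1 H1]]. destruct (C2 d Hd) as [d2 [Hd2 H2]].
  exists (Rmin d1 d2); split. apply Rmin_pos; lra.
  intros a' b' Ha Hb.
  assert (Rabs (a' - a) < d1) by (eapply Rlt_le_trans; [exact Ha| apply Rmin_l]).
  assert (Rabs (a' - a) < d2) by (eapply Rlt_le_trans; [exact Ha| apply Rmin_r]).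
  assert (Rabs (b' - b) < d1) by (eapply Rlt_le_trans; [exact Hb| apply Rmin_l]).
  assert (Rabs (b' - b) < d2) by (eapply Rlt_le_trans; [exact Hb| apply Rmin_r]).
  apply Hc; auto.
Qed.

Lemma cont_on_plus D f g : cont_on D f -> cont_on D g -> cont_on D (fun x y => f x y + g x y).
Proof.
  intros Cf Cg x y Dxy eps He.
  destruct (Cf x y Dxy (eps/2)) as [d1 [Hd1 H1]]; [lra|].
  destruct (Cg x y Dxy (eps/2)) as [d2 [Hd2 H2]]; [lra|].
  exists (Rmin d1 d2); split. apply Rmin_pos; lra.
  intros a b Dab Ha Hb.
  assert (Rabs (a - x) < d1) by (eapply Rlt_le_trans; [exact Ha| apply Rmin_l]).
  assert (Rabs (a - x) < d2) by (eapply Rlt_le_trans; [exact Ha| apply Rmin_r]).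
  assert (Rabs (b - y) < d1) by (eapply Rlt_le_trans; [exact Hb| apply Rmin_l]).
  assert (Rabs (b - y) < d2) by (eapply Rlt_le_trans; [exact Hb| apply Rmin_r]).
  specialize (H1 a b Dab ltac:(auto) ltac:(auto)); specialize (H2 a b Dab ltac:(auto) ltac:(auto)).
  replace (f a b + g a b - (f x y + g x y)) with ((f a b - f x y) + (g a b - g x y)) by ring.
  eapply Rle_lt_trans. apply Rabs_triang. lra.
Qed.

Lemma cont_on_scal D f k : cont_on D f -> cont_on D (fun x y => k * f x y).
Proof.
  intros Cf x y Dxy eps He.
  destruct (Cf x y Dxy (eps / (Rabs k + 1))) as [d [Hd H]].
  { apply Rdiv_lt_0_compat; auto. pose proof (Rabs_pos k); lra. }
  exists d; split; auto. intros a b Dab Ha Hb.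
  specialize (H a b Dab Ha Hb).
  replace (k * f a b - k * f x y) with (k * (f a b - f x y)) by ring.
  rewrite Rabs_mult. pose proof (Rabs_pos k). pose proof (Rabs_pos (f a b - f x y)).
  apply (Rmult_lt_compat_l (Rabs k + 1)) in H; [|lra].
  replace ((Rabs k + 1) * (eps / (Rabs k + 1))) with eps in H by (field; lra). nra.
Qed.

Definition clampR (a b r : R) : R := Rmax a (Rmin b r).

Lemma clamp_lip a b r s : a <= b -> Rabs (clampR a b r - clampR a b s) <= Rabs (r - s).
Proof.
  intro; unfold clampR, Rmax, Rmin.
  repeat destruct Rle_dec; unfold Rabs; repeat destruct Rcase_abs; lra.
Qed.

Lemma cont2_clamp a b : a <= b -> forall r t, cont2 (fun r _ => clampR a b r) r t.
Proof.
  intros Hab r t eps He. exists eps; split; auto. intros r' t' Hr _.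
  eapply Rle_lt_trans. apply clamp_lip; auto. auto.
Qed.

Lemma cont2_cos r t : cont2 (fun _ t => cos t) r t.
Proof. apply (cont2_comp1 cos (fun _ t => t)). apply cont2_snd. apply derivable_continuous_pt, derivable_pt_cos. Qed.
Lemma cont2_sin r t : cont2 (fun _ t => sin t) r t.
Proof. apply (cont2_comp1 sin (fun _ t => t)). apply cont2_snd. apply derivable_continuous_pt, derivable_pt_sin. Qed.

Lemma cs1 t : cos t * cos t + sin t * sin t = 1.
Proof. pose proof (sin2_cos2 t); unfold Rsqr in *; lra. Qed.

Lemma polar_sq r t : (r * cos t) * (r * cos t) + (r * sin t) * (r * sin t) = r * r.
Proof. pose proof (cs1 t); nra. Qed.

Lemma cl_polar Rid Rd r t : 0 < Rid -> Rid <= r <= Rd -> cl_annulus Rid Rd (r * cos t) (r * sin t).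
Proof.
  intros P [A B]; unfold cl_annulus; simpl. rewrite !Rmult_1_r, polar_sq. split; nra.
Qed.

Lemma an_polar Rid Rd r t : 0 < Rid -> Rid < r < Rd -> annulus Rid Rd (r * cos t) (r * sin t).
Proof.
  intros P [A B]; unfold annulus; simpl. rewrite !Rmult_1_r, polar_sq. split; nra.
Qed.

Lemma line_open Rid Rd a b : annulus Rid Rd a b ->
  exists del, del > 0 /\ forall t, Rabs (t - a) < del -> annulus Rid Rd t b /\ annulus Rid Rd b t.
Proof.
  unfold annulus; simpl; rewrite !Rmult_1_r; intros [A B].
  set (gap := Rmin (a * a + b * b - Rid * Rid) (Rd * Rd - (a * a + b * b))).
  assert (Hg : gap > 0) by (unfold gap; apply Rmin_pos; lra).
  assert (C : cont2 (fun x y => x * x + y * y) a b).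
  { apply cont2_plus; apply cont2_mult; try apply cont2_fst; apply cont2_snd. }
  destruct (C gap Hg) as [d [Hd Hc]]. exists d; split; auto.
  intros t Ht. specialize (Hc t b Ht ltac:(unfold Rminus; rewrite Rplus_opp_r, Rabs_R0; lra)).
  apply Rabs_def2 in Hc. pose proof (Rmin_l (a * a + b * b - Rid * Rid) (Rd * Rd - (a * a + b * b))).
  pose proof (Rmin_r (a * a + b * b - Rid * Rid) (Rd * Rd - (a * a + b * b))). fold gap in H, H0.
  repeat split; lra.
Qed.

Lemma Rdiv_nonneg_negneg a b : a <= 0 -> b < 0 -> 0 <= a / b.
Proof.
  intros; replace (a / b) with ((- a) * / (- b)) by (field; lra).
  apply Rmult_le_pos. lra. left; apply Rinv_0_lt_compat; lra.
Qed.

Lemma lim_scal f D l x0 k : limit1_in f D l x0 -> limit1_in (fun x => k * f x) D (k * l) x0.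
Proof.
  intro H. apply (limit_mul (fun _ => k) f D k l x0); auto.
  apply (limit_free (fun _ => k) D x0 x0).
Qed.

Definition hF (Rid : R) : Fn := mkF (mkT (- ln (Rid * Rid), 0) false false 0 :: nil) (1, 0).

Lemma hF_val Rid x y : reF (fval (hF Rid)) x y = Lval x y - ln (Rid * Rid).
Proof. unfold reF, fval, hF, tsum, tval, tw; simpl. ring. Qed.

Lemma dpl_comb A B Cq a b c x d e : derivable_pt_lim A x a -> derivable_pt_lim B x b ->
  derivable_pt_lim Cq x c ->
  derivable_pt_lim (fun t => A t - d * B t + e * Cq t) x (a - d * b + e * c).
Proof.
  intros HA HB HC.
  eapply dpl_ext. 3: apply (derivable_pt_lim_plus _ _ _ _ _
     (derivable_pt_lim_minus _ _ _ _ _ HA (derivable_pt_lim_scal _ d _ _ HB))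
     (derivable_pt_lim_scal _ e _ _ HC)).
  intro; unfold plus_fct, minus_fct, mult_real_fct; reflexivity. reflexivity.
Qed.

Lemma dpl_sq x : derivable_pt_lim (fun t => t * t) x (2 * x).
Proof.
  eapply dpl_ext. 3: apply (derivable_pt_lim_mult _ _ _ _ _ (derivable_pt_lim_id x) (derivable_pt_lim_id x)).
  intro; reflexivity. unfold id; ring.
Qed.

Lemma ln_le x y : 0 < x -> x <= y -> ln x <= ln y.
Proof. intros H1 H2; destruct H2 as [H2|H2]. left; apply ln_increasing; auto. subst; lra. Qed.

Lemma cont_on_ext D f g : (forall x y, f x y = g x y) -> cont_on D f -> cont_on D g.
Proof.
  intros H C x y Dxy eps He; destruct (C x y Dxy eps He) as [d [Hd Hc]]; exists d; split; auto.
  intros; rewrite <- !H; auto.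
Qed.

Lemma uniq_le Rid Rd z : 0 < Rid -> Rid < Rd ->
  C2_harmonic (annulus Rid Rd) z -> cont_on (cl_annulus Rid Rd) z ->
  (forall th, z (Rid * cos th) (Rid * sin th) = 0) ->
  (forall th, dn_outer_R Rid Rd z th 0) ->
  forall x y, cl_annulus Rid Rd x y -> z x y <= 0.
Proof.
  intros P0 P1 Hz Cz Hin Hout px py Hp.
  destruct Hz as [zx [zy [zxx [zxy [zyx [zyy [Hd _]]]]]]].
  apply Rnot_lt_le; intro Hm. set (m := z px py) in *.
  set (h := reF (fval (hF Rid))).
  set (H := ln (Rd * Rd) - ln (Rid * Rid)).
  assert (HH : 0 <= H).
  { unfold H. assert (ln (Rid * Rid) <= ln (Rd * Rd)) by (apply ln_le; nra). lra. }
  set (dl := m / (2 * (H + 1))).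
  assert (Hdl : 0 < dl) by (unfold dl; apply Rdiv_lt_0_compat; lra).
  assert (HdlH : dl * H < m / 2).
  { unfold dl. apply (Rmult_lt_reg_r (2 * (H + 1))). lra.
    replace (m / (2 * (H + 1)) * H * (2 * (H + 1))) with (m * H) by (field; lra). nra. }
  set (ep := Rmin (dl / (2 * (Rd * Rd))) (m / (4 * (Rd * Rd)))).
  assert (HRd : 0 < Rd * Rd) by nra.
  assert (Hep : 0 < ep) by (unfold ep; apply Rmin_pos; apply Rdiv_lt_0_compat; lra).
  assert (Hep1 : ep <= dl / (2 * (Rd * Rd))) by apply Rmin_l.
  assert (Hep2 : ep <= m / (4 * (Rd * Rd))) by apply Rmin_r.
  set (v := fun x y => z x y - dl * h x y + ep * (x * x + y * y)).
  assert (hval : forall x y, h x y = Lval x y - ln (Rid * Rid)) by (intros; apply hF_val).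
  assert (Cv : cont_on (cl_annulus Rid Rd) v).
  { apply cont_on_ext with (f := fun x y => (z x y + (- dl) * h x y) + ep * (x * x + y * y)).
    intros; unfold v; ring.
    apply (cont_on_plus _ (fun x y => z x y + (- dl) * h x y)).
    apply (cont_on_plus _ z (fun x y => (- dl) * h x y)). auto.
    apply (cont_on_scal _ h (- dl)). apply cont_cl_re; auto.
    apply (cont_on_scal _ (fun x y => x * x + y * y) ep). apply cont_on_of; intros.
    apply cont2_plus; apply cont2_mult; try apply cont2_fst; apply cont2_snd. }
  set (F := fun r t => v (clampR Rid Rd r * cos t) (clampR Rid Rd r * sin t)).
  assert (Hcl : forall r, Rid <= clampR Rid Rd r <= Rd).
  { intro r; unfold clampR, Rmax, Rmin; repeat destruct Rle_dec; lra. }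
  assert (Hcl2 : forall r, Rid <= r <= Rd -> clampR Rid Rd r = r).
  { intros r Hr; unfold clampR, Rmax, Rmin; repeat destruct Rle_dec; lra. }
  assert (CF : forall r t, cont2 F r t).
  { intros r t. unfold F.
    apply (cont2_compD (cl_annulus Rid Rd) v (fun r t => clampR Rid Rd r * cos t)
       (fun r t => clampR Rid Rd r * sin t)); auto.
    intros; apply cl_polar; auto.
    apply cont2_mult. apply cont2_clamp; lra. apply cont2_cos.
    apply cont2_mult. apply cont2_clamp; lra. apply cont2_sin. }
  pose proof PI_RGT_0.
  destruct (EVT2 F Rid Rd 0 (2 * PI) CF) as [r0 [t0 [Hr0 [Ht0 Hmax]]]]; try lra.
  set (Qx := r0 * cos t0); set (Qy := r0 * sin t0).
  assert (HQ : forall x y, cl_annulus Rid Rd x y -> v x y <= v Qx Qy).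
  { intros x y Hxy.
    assert (Pxy : 0 < x * x + y * y).
    { unfold cl_annulus in Hxy; simpl in Hxy. nra. }
    destruct (polar_rep x y Pxy) as [r [th [Er [Eth [Ex Ey]]]]].
    assert (Hr : Rid <= r <= Rd).
    { unfold cl_annulus in Hxy; simpl in Hxy; rewrite !Rmult_1_r in Hxy. subst r. split.
      rewrite <- (sqrt_square Rid) by lra. apply sqrt_le_1_alt; lra.
      rewrite <- (sqrt_square Rd) by lra. apply sqrt_le_1_alt; lra. }
    specialize (Hmax r th Hr Eth). unfold F in Hmax. rewrite !Hcl2 in Hmax by auto.
    subst x y; exact Hmax. }
  assert (vp : v px py >= m / 2).
  { unfold v. rewrite hval.
    unfold cl_annulus in Hp; simpl in Hp; rewrite !Rmult_1_r in Hp.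
    assert (Lval px py <= ln (Rd * Rd)) by (unfold Lval; apply ln_le; nra).
    assert (ln (Rid * Rid) <= Lval px py) by (unfold Lval; apply ln_le; nra).
    assert (0 <= ep * (px * px + py * py)) by nra.
    assert (dl * (Lval px py - ln (Rid * Rid)) <= dl * H) by (unfold H; apply Rmult_le_compat_l; lra).
    fold m; lra. }
  pose proof (HQ px py Hp) as vQ.
  destruct (Rle_lt_or_eq_dec Rid r0 (proj1 Hr0)) as [Hlo|Elo].
  destruct (Rle_lt_or_eq_dec r0 Rd (proj2 Hr0)) as [Hhi|Ehi].
  -
    assert (AQ : annulus Rid Rd Qx Qy) by (apply an_polar; auto).
    destruct (line_open Rid Rd Qx Qy AQ) as [d1 [Hd1 L1]].
    assert (AQ' : annulus Rid Rd Qy Qx).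
    { unfold annulus in *; lra. }
    destruct (line_open Rid Rd Qy Qx AQ') as [d2 [Hd2 L2]].
    assert (an_cl : forall x y, annulus Rid Rd x y -> cl_annulus Rid Rd x y).
    { unfold annulus, cl_annulus; intros; lra. }
    assert (G1 : zxx Qx Qy - dl * reF (fval (dxF (dxF (hF Rid)))) Qx Qy + ep * 2 <= 0).
    { apply (sdt (fun t => v t Qy) (fun t => zx t Qy - dl * reF (fval (dxF (hF Rid))) t Qy + ep * (2 * t))
               _ Qx d1 Hd1).
      - intros t Ht. destruct (L1 t Ht) as [A _]. unfold v.
        eapply dpl_ext. 3: apply (dpl_comb (fun t => z t Qy) (fun t => h t Qy) (fun t => t * t + Qy * Qy)).
        intro; reflexivity. reflexivity. apply Hd; auto.
        exact (proj1 (CDx (hF Rid) t Qy (annulus_nz _ _ _ _ A))).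
        eapply dpl_ext. 3: apply (derivable_pt_lim_plus _ _ _ _ _ (dpl_sq t) (derivable_pt_lim_const (Qy*Qy) t)).
        intro; reflexivity. ring.
      - apply dpl_comb. apply Hd; auto. exact (proj1 (CDx (dxF (hF Rid)) Qx Qy (annulus_nz _ _ _ _ AQ))).
        eapply dpl_ext. 3: apply (derivable_pt_lim_scal _ 2 _ _ (derivable_pt_lim_id Qx)).
        intro; reflexivity. ring.
      - intros t Ht. apply HQ, an_cl, L1; auto. }
    assert (G2 : zyy Qx Qy - dl * reF (fval (dyF (dyF (hF Rid)))) Qx Qy + ep * 2 <= 0).
    { apply (sdt (fun t => v Qx t) (fun t => zy Qx t - dl * reF (fval (dyF (hF Rid))) Qx t + ep * (2 * t))
               _ Qy d2 Hd2).
      - intros t Ht. destruct (L2 t Ht) as [_ A]. unfold v.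
        eapply dpl_ext. 3: apply (dpl_comb (fun t => z Qx t) (fun t => h Qx t) (fun t => Qx * Qx + t * t)).
        intro; reflexivity. reflexivity. apply Hd; auto.
        exact (proj1 (CDy (hF Rid) Qx t (annulus_nz _ _ _ _ A))).
        eapply dpl_ext. 3: apply (derivable_pt_lim_plus _ _ _ _ _ (derivable_pt_lim_const (Qx*Qx) t) (dpl_sq t)).
        intro; reflexivity. ring.
      - apply dpl_comb. apply Hd; auto. exact (proj1 (CDy (dyF (hF Rid)) Qx Qy (annulus_nz _ _ _ _ AQ))).
        eapply dpl_ext. 3: apply (derivable_pt_lim_scal _ 2 _ _ (derivable_pt_lim_id Qy)).
        intro; reflexivity. ring.
      - intros t Ht. apply HQ, an_cl, L2; auto. }
    assert (Lz : - (zxx Qx Qy + zyy Qx Qy) = 0) by (apply Hd; auto).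
    pose proof (lap_fval (hF Rid) Qx Qy) as Lh.
    destruct (fval (dxF (dxF (hF Rid))) Qx Qy) eqn:E1, (fval (dyF (dyF (hF Rid))) Qx Qy) eqn:E2.
    unfold reF in G1, G2. rewrite E1 in G1. rewrite E2 in G2. simpl in G1, G2.
    unfold Cadd, C0 in Lh; simpl in Lh. injection Lh as Lh1 Lh2.
    assert (dl * r + dl * r2 = 0) by (rewrite <- Rmult_plus_distr_l, Lh1; ring). lra.
  -
    subst r0.
    set (c := cos t0) in *; set (s := sin t0) in *.
    set (Dm := fun r => Rid <= r < Rd).
    assert (Lq : limit1_in (fun r => (v (r * c) (r * s) - v Qx Qy) / (r - Rd)) Dm
                 (0 - dl * (2 / Rd) + ep * (2 * Rd)) Rd).
    { assert (Lz := Hout t0). unfold dn_outer_R in Lz. fold c s in Lz.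
      assert (Lh : limit1_in (fun r => (h (r * c) (r * s) - h Qx Qy) / (r - Rd)) Dm (2 / Rd) Rd).
      { apply (lim_of_deriv (fun r => h (r * c) (r * s))). intros r Hr; unfold Dm in Hr; lra.
        assert (NZ : (0 + Rd * c, 0 + Rd * s) <> C0).
        { intro E. rewrite !Rplus_0_l in E. injection E as E1 E2.
          pose proof (polar_sq Rd t0) as PS. fold c s in PS. rewrite E1, E2 in PS. nra. }
        eapply dpl_ext. 3: apply (derivable_pt_lim_minus _ _ _ _ _ (dpl_L 0 0 c s Rd NZ)
             (derivable_pt_lim_const (ln (Rid * Rid)) Rd)).
        intro r; unfold minus_fct, fct_cte; rewrite hval; unfold Lval; rewrite !Rplus_0_l; reflexivity.
        rewrite !Rplus_0_l. replace (Rd * c * (Rd * c) + Rd * s * (Rd * s)) with (Rd * Rd) by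
          (pose proof (polar_sq Rd t0) as PS; fold c s in PS; lra).
        pose proof (cs1 t0) as CS; fold c s in CS. field_simplify; try lra.
        
        replace (2 * c ^ 2 + 2 * s ^ 2) with (2 * (c * c + s * s)) by ring. rewrite CS. field; lra. }
      assert (Lqq : limit1_in (fun r => ((r * c * (r * c) + r * s * (r * s)) - (Qx * Qx + Qy * Qy)) / (r - Rd))
                      Dm (2 * Rd) Rd).
      { apply (lim_of_deriv (fun r => r * c * (r * c) + r * s * (r * s))). intros r Hr; unfold Dm in Hr; lra.
        eapply dpl_ext. 3: apply (dpl_sq Rd).
        intro r; pose proof (polar_sq r t0) as PS; fold c s in PS; lra. reflexivity. }
      pose proof (limit_plus _ _ _ _ _ _ (limit_plus _ _ _ _ _ _ Lz (lim_scal _ _ _ _ (- dl) Lh))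
                    (lim_scal _ _ _ _ ep Lqq)) as LL.
      eapply limit1_ext. 2: { replace (0 - dl * (2 / Rd) + ep * (2 * Rd)) with
                  (0 + - dl * (2 / Rd) + ep * (2 * Rd)) by ring. exact LL. }
      intros r Hr; unfold Dm in Hr. unfold v, Qx, Qy. field. lra. }
    assert (Nn : 0 <= 0 - dl * (2 / Rd) + ep * (2 * Rd)).
    { apply (lim_nonneg _ Rid Rd _ P1 Lq). intros r Hr.
      apply Rdiv_nonneg_negneg; [|lra].
      assert (v (r * c) (r * s) <= v Qx Qy) by (apply HQ, cl_polar; auto; lra). lra. }
    assert (ep * (2 * Rd) <= dl / Rd).
    { apply (Rmult_le_compat_r (2 * Rd)) in Hep1; [|lra].
      replace (dl / (2 * (Rd * Rd)) * (2 * Rd)) with (dl / Rd) in Hep1 by (field; lra). lra. }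
    assert (0 < dl / Rd) by (apply Rdiv_lt_0_compat; lra).
    replace (dl * (2 / Rd)) with (2 * (dl / Rd)) in Nn by (field; lra). lra.
  -
    subst r0.
    assert (vQv : v Qx Qy = ep * (Rid * Rid)).
    { unfold v, Qx, Qy. rewrite Hin, hval. unfold Lval. rewrite !polar_sq. ring. }
    assert (ep * (Rid * Rid) <= m / 4).
    { apply (Rmult_le_compat_r (Rd * Rd)) in Hep2; [|lra].
      replace (m / (4 * (Rd * Rd)) * (Rd * Rd)) with (m / 4) in Hep2 by (field; lra).
      assert (ep * (Rid * Rid) <= ep * (Rd * Rd)) by (apply Rmult_le_compat_l; nra). lra. }
    lra.
Qed.

Lemma C2_ext D f g : (forall x y, f x y = g x y) -> C2_harmonic D f -> C2_harmonic D g.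
Proof.
  intros E [ux [uy [uxx [uxy [uyx [uyy [Hd Hc]]]]]]].
  exists ux, uy, uxx, uxy, uyx, uyy. split.
  - intros x y Dxy; destruct (Hd x y Dxy) as [A1 [A2 R]]; split; [|split]; auto.
    eapply dpl_ext. 3: exact A1. intro; apply E. reflexivity.
    eapply dpl_ext. 3: exact A2. intro; apply E. reflexivity.
  - destruct Hc as [C0' Cr]; split; auto. eapply cont_on_ext. 2: exact C0'. auto.
Qed.

Lemma C2_lin D f g k : C2_harmonic D f -> C2_harmonic D g -> C2_harmonic D (fun x y => f x y + k * g x y).
Proof.
  intros [ux [uy [uxx [uxy [uyx [uyy [Hd Hc]]]]]]] [vx [vy [vxx [vxy [vyx [vyy [Kd Kc]]]]]]].
  exists (fun x y => ux x y + k * vx x y), (fun x y => uy x y + k * vy x y),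
    (fun x y => uxx x y + k * vxx x y), (fun x y => uxy x y + k * vxy x y),
    (fun x y => uyx x y + k * vyx x y), (fun x y => uyy x y + k * vyy x y).
  split.
  - intros x y Dxy; destruct (Hd x y Dxy) as [A1 [A2 [A3 [A4 [A5 [A6 A7]]]]]];
      destruct (Kd x y Dxy) as [B1 [B2 [B3 [B4 [B5 [B6 B7]]]]]].
    Ltac dl2 A B k := eapply dpl_ext; [| |apply (derivable_pt_lim_plus _ _ _ _ _ A (derivable_pt_lim_scal _ k _ _ B))];
       [intro; reflexivity| reflexivity].
    split. dl2 A1 B1 k. split. dl2 A2 B2 k. split. dl2 A3 B3 k. split. dl2 A4 B4 k.
    split. dl2 A5 B5 k. split. dl2 A6 B6 k. nra.
  - destruct Hc as [C1 [C2 [C3 [C4 [C5 [C6 C7]]]]]]; destruct Kc as [K1 [K2 [K3 [K4 [K5 [K6 K7]]]]]].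
    repeat split; apply cont_on_plus; auto; apply cont_on_scal; auto.
Qed.

Lemma cont_lin D f g k : cont_on D f -> cont_on D g -> cont_on D (fun x y => f x y + k * g x y).
Proof. intros; apply (cont_on_plus D f (fun x y => k * g x y)); auto. apply cont_on_scal; auto. Qed.

Lemma dnout_lin Rid Rd f g k th a b : dn_outer_R Rid Rd f th a -> dn_outer_R Rid Rd g th b ->
  dn_outer_R Rid Rd (fun x y => f x y + k * g x y) th (a + k * b).
Proof.
  unfold dn_outer_R; intros A B.
  eapply limit1_ext. 2: apply (limit_plus _ _ _ _ _ _ A (lim_scal _ _ _ _ k B)).
  intros r Hr; simpl. field. lra.
Qed.

Lemma dnin_lin Rid Rd f g k th a b : dn_inner_R Rid Rd f th a -> dn_inner_R Rid Rd g th b ->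
  dn_inner_R Rid Rd (fun x y => f x y + k * g x y) th (a + k * b).
Proof.
  unfold dn_inner_R; intros A B.
  eapply limit1_ext. 2: apply (limit_plus _ _ _ _ _ _ A (lim_scal _ _ _ _ k B)).
  intros r Hr; simpl. field. lra.
Qed.

Definition Clin (w1 w2 : R -> R -> Cx) (k : R) : R -> R -> Cx :=
  fun x y => Cadd (w1 x y) (Cscale k (w2 x y)).

Lemma mixed_lin Rid Rd g1 h1 w1 g2 h2 w2 k :
  mixed_sol Rid Rd g1 h1 w1 -> mixed_sol Rid Rd g2 h2 w2 ->
  mixed_sol Rid Rd (fun th => Cadd (g1 th) (Cscale k (g2 th))) (fun th => Cadd (h1 th) (Cscale k (h2 th)))
    (Clin w1 w2 k).
Proof.
  intros [A1 [A2 [A3 [A4 [A5 A6]]]]] [B1 [B2 [B3 [B4 [B5 B6]]]]].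
  unfold mixed_sol, Clin, reF, imF; simpl. split; [|split; [|split; [|split; [|split]]]].
  - apply (C2_lin _ (reF w1) (reF w2)); auto.
  - apply (C2_lin _ (imF w1) (imF w2)); auto.
  - apply (cont_lin _ (reF w1) (reF w2)); auto.
  - apply (cont_lin _ (imF w1) (imF w2)); auto.
  - intro th; destruct (A5 th), (B5 th); split; simpl.
    apply (dnout_lin _ _ (reF w1) (reF w2)); auto.
    apply (dnout_lin _ _ (imF w1) (imF w2)); auto.
  - intro th; rewrite A6, B6; reflexivity.
Qed.

Lemma uniq_real0 Rid Rd z : 0 < Rid -> Rid < Rd ->
  C2_harmonic (annulus Rid Rd) z -> cont_on (cl_annulus Rid Rd) z ->
  (forall th, z (Rid * cos th) (Rid * sin th) = 0) ->
  (forall th, dn_outer_R Rid Rd z th 0) ->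
  forall x y, cl_annulus Rid Rd x y -> z x y = 0.
Proof.
  intros P0 P1 Hh Hc Hin Hout x y Hxy.
  assert (A := uniq_le Rid Rd z P0 P1 Hh Hc Hin Hout x y Hxy).
  assert (B : (fun a b => 0 + (-1) * z a b) x y <= 0).
  { apply (uniq_le Rid Rd (fun a b => 0 + (-1) * z a b)); auto.
    - apply (C2_lin _ (fun _ _ => 0) z). exists (fun _ _ => 0), (fun _ _ => 0), (fun _ _ => 0),
        (fun _ _ => 0), (fun _ _ => 0), (fun _ _ => 0). split.
      intros; repeat split; try apply derivable_pt_lim_const. ring.
      repeat split; apply cont_on_of; intros; apply cont2_const. auto.
    - apply (cont_lin _ (fun _ _ => 0) z); auto. apply cont_on_of; intros; apply cont2_const.
    - intro th; rewrite Hin; ring.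
    - intro th. replace 0 with (0 + (-1) * 0) by ring. apply dnout_lin; auto.
      unfold dn_outer_R. eapply limit1_ext. 2: apply (limit_free (fun _ => 0) _ 0 Rd).
      intros r Hr; simpl; unfold Rdiv; ring. }
  simpl in B. lra.
Qed.

Lemma uniq_mixed Rid Rd g h w1 w2 : 0 < Rid -> Rid < Rd ->
  mixed_sol Rid Rd g h w1 -> mixed_sol Rid Rd g h w2 ->
  forall x y, cl_annulus Rid Rd x y -> w1 x y = w2 x y.
Proof.
  intros P0 P1 S1 S2 x y Hxy.
  destruct (mixed_lin _ _ _ _ _ _ _ _ (-1) S1 S2) as [A1 [A2 [A3 [A4 [A5 A6]]]]].
  assert (E1 : reF (Clin w1 w2 (-1)) x y = 0).
  { apply (uniq_real0 Rid Rd); auto.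
    - intro th; specialize (A6 th). unfold reF; rewrite A6. simpl; ring.
    - intro th; destruct (A5 th) as [B _]. simpl in B. replace 0 with (fst (g th) + -1 * fst (g th)) by ring; auto. }
  assert (E2 : imF (Clin w1 w2 (-1)) x y = 0).
  { apply (uniq_real0 Rid Rd); auto.
    - intro th; specialize (A6 th). unfold imF; rewrite A6. simpl; ring.
    - intro th; destruct (A5 th) as [_ B]. simpl in B. replace 0 with (snd (g th) + -1 * snd (g th)) by ring; auto. }
  unfold reF, imF, Clin in *. destruct (w1 x y), (w2 x y). simpl in *. apply Cpair_eq; lra.
Qed.

Definition Cpol (r p : R) : Cx := (r * cos p, r * sin p).

Lemma Cmul_pol a p b q : Cmul (Cpol a p) (Cpol b q) = Cpol (a * b) (p + q).
Proof. unfold Cpol, Cmul; simpl; rewrite cos_plus, sin_plus; apply Cpair_eq; ring. Qed.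

Lemma Cpown_pol r p n : Cpown (Cpol r p) n = Cpol (r ^ n) (INR n * p).
Proof.
  induction n; simpl Cpown.
  - unfold Cpol, C1; simpl. rewrite Rmult_0_l, cos_0, sin_0. apply Cpair_eq; ring.
  - rewrite IHn, Cmul_pol, S_INR. replace ((INR n + 1) * p) with (p + INR n * p) by ring. reflexivity.
Qed.

Lemma Cinv_pol r p : r <> 0 -> Cinv (Cpol r p) = Cpol (/ r) (- p).
Proof.
  intro H; unfold Cinv, Cnorm2, Cpol; simpl. rewrite cos_neg, sin_neg.
  replace (r * cos p * (r * cos p) + r * sin p * (r * sin p)) with (r * r) by (pose proof (cs1 p); nra).
  apply Cpair_eq; field; auto.
Qed.

Lemma tbase_pol cj r th : tbase cj (r * cos th) (r * sin th) = Cpol r (if cj then - th else th).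
Proof. destruct cj; unfold tbase, Cpol; auto. rewrite cos_neg, sin_neg; apply Cpair_eq; ring. Qed.

Lemma IZR_abs j : IZR j = if Z.leb 0 j then INR (Z.abs_nat j) else - INR (Z.abs_nat j).
Proof.
  rewrite INR_IZR_INZ, Nat2Z.inj_abs_nat. destruct (Z.leb 0 j) eqn:E.
  - apply Z.leb_le in E. rewrite Z.abs_eq; auto.
  - apply Z.leb_gt in E. rewrite Z.abs_neq by lia. rewrite opp_IZR; ring.
Qed.

Definition Pt (j : Z) (c : Cx) : Term :=
  if Z.leb 0 j then mkT c false false (Z.abs_nat j) else mkT c true false (Z.abs_nat j).
Definition Qt (j : Z) (c : Cx) : Term :=
  if Z.leb 0 j then mkT c true true (Z.abs_nat j) else mkT c false true (Z.abs_nat j).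

Lemma Pt_pol j c r th : tval (Pt j c) (r * cos th) (r * sin th) =
  Cscale (r ^ Z.abs_nat j) (Cmul c (Cexpi j th)).
Proof.
  unfold Pt, tval, tw, Cexpi. rewrite (IZR_abs j).
  destruct (Z.leb 0 j); simpl tc; simpl tiv; simpl tcj; simpl tn; rewrite tbase_pol, Cpown_pol;
  unfold Cpol; cx; apply Cpair_eq; [ | | replace (- INR (Z.abs_nat j) * th) with (INR (Z.abs_nat j) * - th) by ring
    | replace (- INR (Z.abs_nat j) * th) with (INR (Z.abs_nat j) * - th) by ring]; ring.
Qed.

Lemma Qt_pol j c r th : r <> 0 -> tval (Qt j c) (r * cos th) (r * sin th) =
  Cscale ((/ r) ^ Z.abs_nat j) (Cmul c (Cexpi j th)).
Proof.
  intro H. unfold Qt, tval, tw, Cexpi. rewrite (IZR_abs j).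
  destruct (Z.leb 0 j); simpl tc; simpl tiv; simpl tcj; simpl tn; rewrite tbase_pol, Cinv_pol, Cpown_pol by auto;
  unfold Cpol; cx; apply Cpair_eq; try rewrite Ropp_involutive;
  try (replace (- INR (Z.abs_nat j) * th) with (INR (Z.abs_nat j) * - th) by ring); ring.
Qed.

Definition fadd (f1 f2 : Fn) : Fn := mkF (fts f1 ++ fts f2) (Cadd (fg f1) (fg f2)).
Definition fzero : Fn := mkF nil C0.

Lemma fval_fadd f1 f2 x y : fval (fadd f1 f2) x y = Cadd (fval f1 x y) (fval f2 x y).
Proof.
  unfold fval, fadd; simpl. rewrite tsum_app.
  generalize (tsum (fts f1) x y) (tsum (fts f2) x y) (fg f1) (fg f2); intros; cx; apply Cpair_eq; ring.
Qed.

Lemma fval_fzero x y : fval fzero x y = C0.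
Proof. unfold fval, fzero, tsum; simpl; cx; apply Cpair_eq; ring. Qed.

Definition psum (prof : Z -> R -> R) (a : Z -> Cx) (L : list Z) (r th : R) : Cx :=
  fold_right (fun j acc => Cadd (Cscale (prof j r) (Cmul (a j) (Cexpi j th))) acc) C0 L.

Lemma fval_sum (mode : Z -> Fn) prof a L r th :
  (forall j, In j L -> fval (mode j) (r * cos th) (r * sin th) = Cscale (prof j r) (Cmul (a j) (Cexpi j th))) ->
  fval (fold_right fadd fzero (map mode L)) (r * cos th) (r * sin th) = psum prof a L r th.
Proof.
  induction L as [|j L IH]; intro H; simpl.
  - apply fval_fzero.
  - rewrite fval_fadd, H, IH. reflexivity. intros; apply H; right; auto. left; auto.
Qed.

Lemma CD_psum prof d a L th r0 : (forall j, derivable_pt_lim (prof j) r0 (d j)) ->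
  CD (fun r => psum prof a L r th) r0 (psum (fun j _ => d j) a L r0 th).
Proof.
  intro H; induction L as [|j L IH]; simpl.
  - apply CD_const.
  - apply (CD_add (fun r => Cscale (prof j r) (Cmul (a j) (Cexpi j th))) (fun r => psum prof a L r th)); auto.
    destruct (Cmul (a j) (Cexpi j th)) as [k1 k2]; split; simpl.
    + eapply dpl_ext. 3: apply (derivable_pt_lim_mult _ _ _ _ _ (H j) (derivable_pt_lim_const k1 r0)).
      intro; reflexivity. unfold fct_cte; ring.
    + eapply dpl_ext. 3: apply (derivable_pt_lim_mult _ _ _ _ _ (H j) (derivable_pt_lim_const k2 r0)).
      intro; reflexivity. unfold fct_cte; ring.
Qed.

Lemma dnout_F Rid Rd f prof d a L th : Rid < Rd ->
  (forall r, Rid <= r <= Rd -> fval f (r * cos th) (r * sin th) = psum prof a L r th) ->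
  (forall j, derivable_pt_lim (prof j) Rd (d j)) ->
  dn_outer Rid Rd (fval f) th (psum (fun j _ => d j) a L Rd th).
Proof.
  intros HR E D. destruct (CD_psum prof d a L th Rd D) as [D1 D2]. split; unfold dn_outer_R, reF, imF.
  - eapply limit1_ext. 2: apply (lim_of_deriv (fun s => fst (psum prof a L s th)) Rd _ (fun r => Rid <= r < Rd)); [|exact D1].
    intros r Hr; cbv beta. rewrite !E; auto; lra. intros r Hr; lra.
  - eapply limit1_ext. 2: apply (lim_of_deriv (fun s => snd (psum prof a L s th)) Rd _ (fun r => Rid <= r < Rd)); [|exact D2].
    intros r Hr; cbv beta. rewrite !E; auto; lra. intros r Hr; lra.
Qed.

Lemma dnin_F Rid Rd f prof d a L th : Rid < Rd ->
  (forall r, Rid <= r <= Rd -> fval f (r * cos th) (r * sin th) = psum prof a L r th) ->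
  (forall j, derivable_pt_lim (prof j) Rid (d j)) ->
  dn_inner Rid Rd (fval f) th (Copp (psum (fun j _ => d j) a L Rid th)).
Proof.
  intros HR E D. destruct (CD_psum prof d a L th Rid D) as [D1 D2]. split; unfold dn_inner_R, reF, imF, Copp; cbn [fst snd].
  - eapply limit1_ext. 2: apply limit_Ropp, (lim_of_deriv (fun s => fst (psum prof a L s th)) Rid _ (fun r => Rid < r <= Rd)); [|exact D1].
    intros r Hr; cbv beta. rewrite !E; auto; lra. intros r Hr; lra.
  - eapply limit1_ext. 2: apply limit_Ropp, (lim_of_deriv (fun s => snd (psum prof a L s th)) Rid _ (fun r => Rid < r <= Rd)); [|exact D2].
    intros r Hr; cbv beta. rewrite !E; auto; lra. intros r Hr; lra.
Qed.

Lemma dpl_prof al be n r : r <> 0 ->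
  derivable_pt_lim (fun s => al * s ^ n + be * (/ s) ^ n) r (INR n * (al * r ^ n - be * (/ r) ^ n) / r).
Proof.
  intro H.
  assert (D1 : derivable_pt_lim (fun s => s ^ n) r (INR n * r ^ n / r)).
  { eapply dpl_ext. 3: apply derivable_pt_lim_pow. intro; reflexivity.
    destruct n. simpl; field; auto. simpl pred. rewrite <- tech_pow_Rmult. field; auto. }
  assert (D2 : derivable_pt_lim (fun s => (/ s) ^ n) r (- INR n * (/ r) ^ n / r)).
  { assert (Di : derivable_pt_lim Rinv r (- / (r * r))).
    { eapply dpl_ext. 3: apply (derivable_pt_lim_div (fct_cte 1) id r 0 1 (derivable_pt_lim_const 1 r) (derivable_pt_lim_id r)).
      intro; unfold div_fct, fct_cte, id; unfold Rdiv; ring.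
      unfold fct_cte, id, Rsqr; field; auto. unfold id; auto. }
    eapply dpl_ext. 3: apply (derivable_pt_lim_comp Rinv (fun s => s ^ n) r _ _ Di (derivable_pt_lim_pow (/ r) n)).
    intro; unfold comp; reflexivity.
    destruct n. simpl; field; auto. simpl pred. rewrite <- tech_pow_Rmult. field; auto. }
  eapply dpl_ext. 3: apply (derivable_pt_lim_plus _ _ _ _ _ (derivable_pt_lim_scal _ al _ _ D1)
     (derivable_pt_lim_scal _ be _ _ D2)).
  intro; unfold plus_fct, mult_real_fct; reflexivity. field; auto.
Qed.

Section Modes.
Variables Rid Rd : R.
Variable a : Z -> Cx.

Definition nn (j : Z) : nat := Z.abs_nat j.
Definition uu (j : Z) : R := Rid ^ nn j.
Definition ww (j : Z) : R := Rd ^ nn j.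
Definition AW (j : Z) : R := uu j / (uu j * uu j + ww j * ww j).
Definition BW (j : Z) : R := AW j * (ww j * ww j).
Definition profW (j : Z) (r : R) : R := AW j * r ^ nn j + BW j * (/ r) ^ nn j.
Definition modeW (j : Z) : Fn :=
  mkF (Pt j (Cscale (AW j) (a j)) :: Qt j (Cscale (BW j) (a j)) :: nil) C0.
Definition GV (j : Z) : R := - (4 * AW j * ww j).
Definition CV (j : Z) : R := GV j * Rd / (INR (nn j) * (ww j + uu j * uu j / ww j)).
Definition DV (j : Z) : R := - (CV j * (uu j * uu j)).
Definition gam : R := GV 0 * Rd / 2.
Definition profV (j : Z) (r : R) : R :=
  if Z.eqb j 0 then gam * (ln (r * r) - ln (Rid * Rid)) else CV j * r ^ nn j + DV j * (/ r) ^ nn j.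
Definition modeV (j : Z) : Fn :=
  if Z.eqb j 0 then mkF (mkT (Cscale (- (gam * ln (Rid * Rid))) (a j)) false false 0 :: nil) (Cscale gam (a j))
  else mkF (Pt j (Cscale (CV j) (a j)) :: Qt j (Cscale (DV j) (a j)) :: nil) C0.

Lemma modeW_pol j r th : r <> 0 ->
  fval (modeW j) (r * cos th) (r * sin th) = Cscale (profW j r) (Cmul (a j) (Cexpi j th)).
Proof.
  intro H; unfold fval, modeW, tsum; simpl fts; simpl fg. cbn [fold_right].
  rewrite Pt_pol, Qt_pol by auto. unfold profW, nn.
  generalize (Cexpi j th) (a j) (r ^ Z.abs_nat j) ((/ r) ^ Z.abs_nat j); intros; cx; apply Cpair_eq; ring.
Qed.

Lemma modeV_pol j r th : r <> 0 ->
  fval (modeV j) (r * cos th) (r * sin th) = Cscale (profV j r) (Cmul (a j) (Cexpi j th)).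
Proof.
  intro H; unfold fval, modeV, profV, tsum. destruct (Z.eqb j 0) eqn:E; simpl fts; simpl fg; cbn [fold_right].
  - apply Z.eqb_eq in E; subst j. unfold Cexpi, Lval, tval, tw; simpl. rewrite polar_sq.
    rewrite Rmult_0_l, cos_0, sin_0. generalize (a 0%Z); intros; cx; apply Cpair_eq; ring.
  - rewrite Pt_pol, Qt_pol by auto. unfold nn.
    generalize (Cexpi j th) (a j) (r ^ Z.abs_nat j) ((/ r) ^ Z.abs_nat j); intros; cx; apply Cpair_eq; ring.
Qed.

Hypothesis P0 : 0 < Rid.
Hypothesis P1 : Rid < Rd.

Lemma uu_pos j : 0 < uu j. Proof. unfold uu; apply pow_lt; auto. Qed.
Lemma ww_pos j : 0 < ww j. Proof. unfold ww; apply pow_lt; lra. Qed.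

Lemma profW_Rid j : profW j Rid = 1.
Proof.
  unfold profW, BW, AW; rewrite pow_inv. fold (uu j) (ww j).
  pose proof (uu_pos j); pose proof (ww_pos j). field. split; nra.
Qed.

Lemma profW_Rd j : profW j Rd = 2 * AW j * ww j.
Proof.
  unfold profW, BW, AW; rewrite pow_inv. fold (uu j) (ww j).
  pose proof (uu_pos j); pose proof (ww_pos j). field. split; nra.
Qed.

Lemma dprofW j r : r <> 0 -> derivable_pt_lim (profW j) r (INR (nn j) * (AW j * r ^ nn j - BW j * (/ r) ^ nn j) / r).
Proof. intro; unfold profW; apply dpl_prof; auto. Qed.

Lemma dprofW_Rd j : INR (nn j) * (AW j * Rd ^ nn j - BW j * (/ Rd) ^ nn j) / Rd = 0.
Proof.
  unfold BW, AW; rewrite pow_inv. fold (uu j) (ww j).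
  pose proof (uu_pos j); pose proof (ww_pos j). field. split; try nra; lra.
Qed.

Lemma profV_Rid j : profV j Rid = 0.
Proof.
  unfold profV; destruct (Z.eqb j 0). ring.
  unfold DV; rewrite pow_inv. fold (uu j). pose proof (uu_pos j). field. lra.
Qed.

Definition dprofV (j : Z) (r : R) : R :=
  if Z.eqb j 0 then gam * (2 / r) else INR (nn j) * (CV j * r ^ nn j - DV j * (/ r) ^ nn j) / r.

Lemma dprofV_ok j r : 0 < r -> derivable_pt_lim (profV j) r (dprofV j r).
Proof.
  intro H. unfold profV, dprofV; destruct (Z.eqb j 0).
  - assert (Hq : derivable_pt_lim (fun s => ln (s * s)) r (2 / r)).
    { eapply dpl_ext. 3: apply (derivable_pt_lim_comp (fun s => s * s) ln r _ _ (dpl_sq r)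
        (derivable_pt_lim_ln (r * r) ltac:(nra))).
      intro; unfold comp; reflexivity. field; lra. }
    eapply dpl_ext. 3: apply (derivable_pt_lim_scal _ gam _ _ (derivable_pt_lim_minus _ _ _ _ _ Hq
       (derivable_pt_lim_const (ln (Rid * Rid)) r))).
    intro; unfold mult_real_fct, minus_fct, fct_cte; reflexivity. ring.
  - apply dpl_prof; lra.
Qed.

Lemma nn_pos j : Z.eqb j 0 = false -> 0 < INR (nn j).
Proof.
  intro E; apply lt_0_INR. unfold nn. apply Z.eqb_neq in E. lia.
Qed.

Lemma dprofV_Rd j : dprofV j Rd = GV j.
Proof.
  unfold dprofV; destruct (Z.eqb j 0) eqn:E.
  - apply Z.eqb_eq in E; subst j. unfold gam. field. lra.
  - unfold DV, CV. rewrite pow_inv. fold (ww j). pose proof (uu_pos j); pose proof (ww_pos j).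
    pose proof (nn_pos j E). field. repeat split; try lra. nra.

Qed.

Lemma powerRZ_nat x k : powerRZ x (Z.of_nat k) = x ^ k.
Proof. symmetry; apply pow_powerRZ. Qed.

Lemma Cj_eq j : Cj Rid Rd j = 8 * (ww j * ww j * Rd) * (uu j * uu j / Rid) / ((uu j * uu j + ww j * ww j) ^ 2).
Proof.
  unfold Cj, uu, ww, nn. rewrite <- Nat2Z.inj_abs_nat. set (n := Z.abs_nat j).
  replace (2 * Z.of_nat n + 1)%Z with (Z.of_nat (2 * n + 1)) by lia.
  replace (2 * Z.of_nat n)%Z with (Z.of_nat (2 * n)) by lia.
  replace (Z.of_nat (2 * n) - 1)%Z with (Z.of_nat (2 * n) + (-1))%Z by lia.
  rewrite powerRZ_add by lra. rewrite !powerRZ_nat.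
  replace (powerRZ Rid (-1)) with (/ Rid) by (simpl; field; lra).
  replace (2 * n + 1)%nat with (n + n + 1)%nat by lia. replace (2 * n)%nat with (n + n)%nat by lia.
  rewrite !pow_add, pow_1. unfold Rdiv; ring.
Qed.

Lemma dprofV_Rid j : - dprofV j Rid = Cj Rid Rd j.
Proof.
  rewrite Cj_eq. unfold dprofV; destruct (Z.eqb j 0) eqn:E.
  - apply Z.eqb_eq in E; subst j. unfold gam, GV, AW, uu, ww, nn; simpl. field. lra.
  - unfold DV, CV, GV, AW. rewrite pow_inv. fold (uu j). pose proof (uu_pos j); pose proof (ww_pos j).
    pose proof (nn_pos j E). field. repeat split; try lra; try nra.
Qed.

End Modes.

Definition Lst (M N : nat) : list Z := filter (fun j => Z.leb (Z.of_nat M) (Z.abs j)) (Zrange N).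

Lemma fsum_psum M N b th r : fsum M N b th = psum (fun _ _ => 1) b (Lst M N) r th.
Proof.
  unfold fsum, Lst. generalize (filter (fun j => Z.leb (Z.of_nat M) (Z.abs j)) (Zrange N)).
  intro l; induction l; simpl; auto. rewrite IHl. f_equal. cx; apply Cpair_eq; ring.
Qed.

Lemma psum_ext p q a L r r' th : (forall j, p j r = q j r') -> psum p a L r th = psum q a L r' th.
Proof. intro H; induction L; simpl; auto. rewrite IHL, H; auto. Qed.

Lemma psum_coef p a L r th r' : psum p a L r th = psum (fun _ _ => 1) (fun j => Cscale (p j r) (a j)) L r' th.
Proof. induction L; simpl; auto. rewrite IHL. f_equal. generalize (a a0) (Cexpi a0 th); intros; cx; apply Cpair_eq; ring. Qed.

Lemma psum_zero a L r th : psum (fun _ _ => 0) a L r th = C0.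
Proof. induction L; simpl; auto. rewrite IHL. generalize (Cmul (a a0) (Cexpi a0 th)); intros; cx; apply Cpair_eq; ring. Qed.

Lemma psum_lin p q k a L r th :
  Cadd (psum p a L r th) (Cscale k (psum q a L r th)) = psum (fun j r => p j r + k * q j r) a L r th.
Proof.
  induction L; simpl. cx; apply Cpair_eq; ring. rewrite <- IHL.
  generalize (psum p a L r th) (psum q a L r th) (Cmul (a a0) (Cexpi a0 th)); intros; cx; apply Cpair_eq; ring.
Qed.

Lemma psum_scal k p a L r th : Cscale k (psum p a L r th) = psum (fun j r => k * p j r) a L r th.
Proof.
  induction L; simpl. cx; apply Cpair_eq; ring. rewrite <- IHL.
  generalize (psum p a L r th) (Cmul (a a0) (Cexpi a0 th)); intros; cx; apply Cpair_eq; ring.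
Qed.

Lemma dnin_transfer Rid Rd w1 w2 th l : 0 < Rid -> Rid < Rd ->
  (forall x y, cl_annulus Rid Rd x y -> w1 x y = w2 x y) ->
  dn_inner Rid Rd w1 th l -> dn_inner Rid Rd w2 th l.
Proof.
  intros P0 P1 E [A B]; split; unfold dn_inner_R, reF, imF in *.
  - eapply limit1_ext. 2: exact A. intros r Hr; cbv beta. rewrite !E; auto; apply cl_polar; lra.
  - eapply limit1_ext. 2: exact B. intros r Hr; cbv beta. rewrite !E; auto; apply cl_polar; lra.
Qed.

Lemma adh_inner Rid Rd : Rid < Rd -> adhDa (fun r => Rid < r <= Rd) Rid.
Proof.
  intros H alp Ha. exists (Rmin Rd (Rid + alp / 2)). split.
  unfold Rmin; destruct Rle_dec; lra.
  simpl; unfold R_dist. unfold Rmin; destruct Rle_dec; rewrite Rabs_right; lra.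
Qed.

Lemma dnin_unique Rid Rd w th l1 l2 : Rid < Rd ->
  dn_inner Rid Rd w th l1 -> dn_inner Rid Rd w th l2 -> l1 = l2.
Proof.
  intros H [A1 B1] [A2 B2]. destruct l1, l2; simpl in *.
  f_equal; eapply single_limit; eauto; apply adh_inner; auto.
Qed.

Theorem mainTheorem4
  (Rid Rd : R) (HRid : 0 < Rid) (HRlt : Rid < Rd)
  (ubar qbar : R -> Cx)
  (omega_star : R -> Cx) (v_star : R -> R -> Cx)
  (Hvstar : primary_sol Rid Rd qbar omega_star v_star)
  (Hexact : forall th, v_star (Rd * cos th) (Rd * sin th) = ubar th)
  (omega_k : R -> Cx) (v_k vhat_k : R -> R -> Cx) (rho_k : R) (Hrho : 0 < rho_k)
  (Hvk : primary_sol Rid Rd qbar omega_k v_k)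
  (Hvhatk : adjoint_sol Rid Rd ubar v_k vhat_k)
  (M N : nat) (HMN : (M <= N)%nat) (a : Z -> Cx)
  (Hmu : forall th, Csub (omega_star th) (omega_k th) = fsum M N a th) :
  (forall th, dn_inner Rid Rd vhat_k th
                (fsum M N (fun j => Cscale (Cj Rid Rd j) (a j)) th))
  /\
  (forall Jk : R -> Cx,
     (forall th, dn_inner Rid Rd vhat_k th (Copp (Jk th))) ->
     forall th,
       Csub (omega_star th) (Csub (omega_k th) (Cscale rho_k (Jk th)))
       = fsum M N (fun j => Cscale (1 - Cj Rid Rd j * rho_k) (a j)) th).
Proof.
  set (L := Lst M N).
  set (W := fold_right fadd fzero (map (modeW Rid Rd a) L)).
  set (Vh := fold_right fadd fzero (map (modeV Rid Rd a) L)).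
  assert (Wpol : forall r th, 0 < r -> fval W (r * cos th) (r * sin th) = psum (profW Rid Rd) a L r th).
  { intros r th Hr; apply fval_sum; intros; apply modeW_pol; lra. }
  assert (Vpol : forall r th, 0 < r -> fval Vh (r * cos th) (r * sin th) = psum (profV Rid Rd) a L r th).
  { intros r th Hr; apply fval_sum; intros; apply modeV_pol; lra. }
  assert (SW : mixed_sol Rid Rd (fun _ => C0) (fun th => fsum M N a th) (fval W)).
  { split; [apply harm_re|]. split; [apply harm_im|]. split; [apply cont_cl_re; auto|].
    split; [apply cont_cl_im; auto|]. split.
    - intro th. pose proof (dnout_F Rid Rd W (profW Rid Rd)
        (fun j => INR (nn j) * (AW Rid Rd j * Rd ^ nn j - BW Rid Rd j * (/ Rd) ^ nn j) / Rd) a L th HRlt) as D.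
      rewrite (psum_ext _ (fun _ _ => 0) _ _ _ Rd) in D. rewrite psum_zero in D. apply D.
      intros; apply Wpol; lra. intro j; apply dprofW; lra. intro j; apply dprofW_Rd; lra.
    - intro th. rewrite Wpol by lra. rewrite (fsum_psum M N a th Rid).
      apply psum_ext. intro j; apply profW_Rid; lra. }
  pose proof (mixed_lin _ _ _ _ _ _ _ _ 1 Hvk SW) as S1.
  assert (Eg : (fun th => Cadd (qbar th) (Cscale 1 C0)) = qbar).
  { apply functional_extensionality; intro th; destruct (qbar th); cx; apply Cpair_eq; ring. }
  assert (Eh : (fun th => Cadd (omega_k th) (Cscale 1 (fsum M N a th))) = omega_star).
  { apply functional_extensionality; intro th; rewrite <- Hmu.
    destruct (omega_k th), (omega_star th); cx; apply Cpair_eq; ring. }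
  cbv beta in S1. rewrite Eg, Eh in S1.
  assert (Evs : forall x y, cl_annulus Rid Rd x y -> v_star x y = Clin v_k (fval W) 1 x y).
  { intros x y Hxy; exact (uniq_mixed Rid Rd qbar omega_star v_star (Clin v_k (fval W) 1) HRid HRlt Hvstar S1 x y Hxy). }
  assert (SV : adjoint_sol Rid Rd ubar v_k (fval Vh)).
  { split; [apply harm_re|]. split; [apply harm_im|]. split; [apply cont_cl_re; auto|].
    split; [apply cont_cl_im; auto|]. split.
    - intro th. pose proof (dnout_F Rid Rd Vh (profV Rid Rd) (fun j => dprofV Rid Rd j Rd) a L th HRlt) as D.
      assert (Eq : Cscale 2 (Csub (v_k (Rd * cos th) (Rd * sin th)) (ubar th)) =
                   psum (fun j _ => dprofV Rid Rd j Rd) a L Rd th).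
      { rewrite <- Hexact, Evs by (apply cl_polar; lra). unfold Clin. rewrite Wpol by lra.
        rewrite (psum_ext (fun j _ => dprofV Rid Rd j Rd) (fun j r => -2 * profW Rid Rd j r) _ _ _ Rd).
        rewrite <- psum_scal. generalize (psum (profW Rid Rd) a L Rd th) (v_k (Rd * cos th) (Rd * sin th)).
        intros; cx; apply Cpair_eq; ring.
        intro j. rewrite dprofV_Rd, profW_Rd by lra. unfold GV; ring. }
      rewrite Eq. apply D. intros; apply Vpol; lra. intro j; apply dprofV_ok; lra.
    - intro th. rewrite Vpol by lra. rewrite (psum_ext _ (fun _ _ => 0) _ _ _ Rid). apply psum_zero.
      intro j; apply profV_Rid; lra. }
  assert (Evh : forall x y, cl_annulus Rid Rd x y -> fval Vh x y = vhat_k x y).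
  { intros x y Hxy; exact (uniq_mixed Rid Rd _ _ (fval Vh) vhat_k HRid HRlt SV Hvhatk x y Hxy). }
  assert (DI : forall th, dn_inner Rid Rd vhat_k th (fsum M N (fun j => Cscale (Cj Rid Rd j) (a j)) th)).
  { intro th. apply (dnin_transfer Rid Rd (fval Vh)); auto.
    pose proof (dnin_F Rid Rd Vh (profV Rid Rd) (fun j => dprofV Rid Rd j Rid) a L th HRlt) as D.
    replace (fsum M N (fun j => Cscale (Cj Rid Rd j) (a j)) th) with
      (Copp (psum (fun j _ => dprofV Rid Rd j Rid) a L Rid th)).
    apply D. intros; apply Vpol; lra. intro j; apply dprofV_ok; lra.
    rewrite (fsum_psum M N _ th Rid).
    replace (Copp (psum (fun j _ => dprofV Rid Rd j Rid) a L Rid th)) with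
      (Cscale (-1) (psum (fun j _ => dprofV Rid Rd j Rid) a L Rid th))
      by (generalize (psum (fun j _ => dprofV Rid Rd j Rid) a L Rid th); intros; cx; apply Cpair_eq; ring).
    rewrite psum_scal, (psum_coef _ a L Rid th Rid). fold L. f_equal.
    apply functional_extensionality; intro j. f_equal. rewrite <- dprofV_Rid by lra. ring. }
  split; [exact DI|].
  intros Jk HJ th.
  pose proof (dnin_unique _ _ _ _ _ _ HRlt (HJ th) (DI th)) as E.
  assert (EJ : Jk th = Copp (fsum M N (fun j => Cscale (Cj Rid Rd j) (a j)) th)).
  { rewrite <- E. destruct (Jk th); cx; apply Cpair_eq; ring. }
  rewrite EJ.
  assert (Lin : forall b c k, Cadd (fsum M N b th) (Cscale k (fsum M N c th)) =
                 fsum M N (fun j => Cadd (b j) (Cscale k (c j))) th).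
  { intros b c k. unfold fsum. generalize (filter (fun j => Z.leb (Z.of_nat M) (Z.abs j)) (Zrange N)).
    intro l; induction l as [|j l IH]; simpl. cx; apply Cpair_eq; ring. rewrite <- IH.
    generalize (fold_right (fun j acc => Cadd (Cmul (b j) (Cexpi j th)) acc) C0 l)
      (fold_right (fun j acc => Cadd (Cmul (c j) (Cexpi j th)) acc) C0 l) (b j) (c j) (Cexpi j th).
    intros; cx; apply Cpair_eq; ring. }
  replace (fun j => Cscale (1 - Cj Rid Rd j * rho_k) (a j)) with
    (fun j => Cadd (a j) (Cscale (- rho_k) (Cscale (Cj Rid Rd j) (a j)))).
  2: { apply functional_extensionality; intro j; destruct (a j); cx; apply Cpair_eq; ring. }
  rewrite <- Lin, <- Hmu.
  generalize (omega_star th) (omega_k th) (fsum M N (fun j => Cscale (Cj Rid Rd j) (a j)) th).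
  intros; cx; unfold Cadd; simpl; apply Cpair_eq; ring.
Qed.
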